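(* For $n>0$, the image $\zeta_n(MS(n))\subset\mathrm{Map}(S^1,(S^1)^n)$ is exactly the space of based maps $g:S^1\to(S^1)^n$ such that: (1) for each $i=1,\dots,n$, $\mathrm{pr}_i\circ g$ is a weakly monotone degree $1$ map (where $\mathrm{pr}_i$ is the projection to the $i$-th factor); (2) there is a partition of $S^1$ into finitely many closed intervals meeting only at endpoints such that on each interval $\mathrm{pr}_i\circ g$ is constant for all indices $i$ except one special index; (3) the counterclockwise cyclic sequence of special indices contains no subsequence of the form $i,j,i,j$ with $i\neq j$. Consequently the images $\zeta_n(MS(n))$, $n\ge 0$ (with $\zeta_0$ the unique map to the point $\mathrm{Map}(S^1,(S^1)^0)$), form a symmetric suboperad of $\mathrm{Coend}(S^1)$.
   Context: Identify $S^1=I/\partial I$ with base point the image of $\partial I$. $\mathcal{F}(n)$ is the space of partitions $x$ of $S^1$ into $n$ closed $1$-submanifolds $I_1(x),\dots,I_n(x)$ of equal measure $1/n$ with pairwise disjoint interiors such that there is no cyclically ordered $4$-tuple $(z_1,z_2,z_3,z_4)$ with $z_1,z_3\in\mathrm{int}\,I_j(x)$, $z_2,z_4\in\mathrm{int}\,I_k(x)$, $j\ne k$. For $x\in\mathcal{F}(n)$ and $j$, $\pi_j:S^1\to S^1$ is the based map obtained by collapsing each connected component of the closure of $S^1\setminus I_j(x)$ to a point and rescaling the quotient circle by the factor $n$; $c(x)=(\pi_1,\dots,\pi_n):S^1\to(S^1)^n$. $\mathrm{Mon}(I,\partial I)$ is the space of self-maps of $S^1$ induced by weakly monotone maps $I\to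 I$ fixing $0$ and $1$. $MS(n)=\mathcal{F}(n)\times\mathrm{Mon}(I,\partial I)$ for $n>0$, $MS(0)$ a point, and $\zeta_n:MS(n)\to\mathrm{Map}(S^1,(S^1)^n)$, $\zeta_n(x,f)=c(x)\circ f$. $\mathrm{Coend}(S^1)$ is the symmetric operad with $\mathrm{Coend}(S^1)(n)=\mathrm{Map}(S^1,(S^1)^n)$, composition $f\circ_i g=(f_1,\dots,f_{i-1},g_1\circ f_i,\dots,g_l\circ f_i,f_{i+1},\dots,f_k)$, unit the identity, $\Sigma_n$ permuting coordinates. *)

(* Defs.v *)
From Stdlib Require Import Reals ZArith Arith Lia.
Open Scope R_scope.

(* ---------- The circle S^1 = I / dI, I = [0,1] ----------
   A point of S^1 is represented by a real number read modulo 1 (0 ~ 1 is the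
   base point).  A map S^1 -> (S^1)^n is represented by a function
   g : R -> nat -> R, of which only the values g t i with t in [0,1] and i < n
   matter, each coordinate being read modulo 1. *)

Definition inI (t : R) : Prop := 0 <= t <= 1.

Definition ceq (x y : R) : Prop := exists k : Z, x - y = IZR k.

Definition cnear (x y eps : R) : Prop := exists k : Z, Rabs (x - y - IZR k) < eps.

Definition rcont (h : R -> R) : Prop :=
  forall t, inI t -> forall eps, 0 < eps -> exists delta, 0 < delta /\
    forall s, inI s -> Rabs (s - t) < delta -> Rabs (h s - h t) < eps.

Definition ccont (h : R -> R) : Prop :=
  forall t, inI t -> forall eps, 0 < eps -> exists delta, 0 < delta /\
    forall s, inI s -> Rabs (s - t) < delta -> cnear (h s) (h t) eps.

Definition nondecr (h : R -> R) : Prop :=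
  forall s t, inI s -> inI t -> s <= t -> h s <= h t.

Definition cmap := R -> nat -> R.

Definition is_based_map (n : nat) (g : cmap) : Prop :=
  forall i, (i < n)%nat ->
    ccont (fun t => g t i) /\ ceq (g 0 i) 0 /\ ceq (g 1 i) 0.

Definition map_eq (n : nat) (g h : cmap) : Prop :=
  forall t, inI t -> forall i, (i < n)%nat -> ceq (g t i) (h t i).

Fixpoint rsum (f : nat -> R) (m : nat) : R :=
  match m with O => 0 | S m' => rsum f m' + f m' end.

Definition subdivision (m : nat) (t : nat -> R) : Prop :=
  (0 < m)%nat /\ t O = 0 /\ t m = 1 /\ forall k, (k < m)%nat -> t k < t (S k).

(* ---------- The space F(n) ----------
   A partition x is given by a subdivision of I and a label pd_lab k for each
   closed interval [t_k, t_{k+1}]; the piece I_j(x) is the union of the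
   intervals labelled j (seen in S^1).  Every closed 1-submanifold of S^1 is a
   finite union of such intervals, so every partition arises this way. *)
Record part_data := PD { pd_m : nat; pd_t : nat -> R; pd_lab : nat -> nat }.

Definition in_piece (x : part_data) (j : nat) (w : R) : Prop :=
  let u := frac_part w in
  exists k, (k < pd_m x)%nat /\ pd_lab x k = j /\
    (pd_t x k <= u <= pd_t x (S k) \/ (u = 0 /\ pd_t x (S k) = 1)).

Definition in_interior (x : part_data) (j : nat) (z : R) : Prop :=
  exists eps, 0 < eps /\ forall w, Rabs (w - z) < eps -> in_piece x j w.

Definition cyc4 (z1 z2 z3 z4 : R) : Prop :=
  (0 <= z1 < 1 /\ 0 <= z2 < 1 /\ 0 <= z3 < 1 /\ 0 <= z4 < 1) /\
  ((z1 < z2 /\ z2 < z3 /\ z3 < z4) \/ (z2 < z3 /\ z3 < z4 /\ z4 < z1) \/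
   (z3 < z4 /\ z4 < z1 /\ z1 < z2) \/ (z4 < z1 /\ z1 < z2 /\ z2 < z3)).

Definition piece_measure (x : part_data) (j : nat) : R :=
  rsum (fun k => if Nat.eqb (pd_lab x k) j
                 then pd_t x (S k) - pd_t x k else 0) (pd_m x).

Definition in_F (n : nat) (x : part_data) : Prop :=
  subdivision (pd_m x) (pd_t x) /\
  (forall k, (k < pd_m x)%nat -> (pd_lab x k < n)%nat) /\
  (forall j, (j < n)%nat -> piece_measure x j = 1 / INR n) /\
  (forall j k z, (j < n)%nat -> (k < n)%nat -> j <> k ->
     ~ (in_interior x j z /\ in_interior x k z)) /\
  (forall j k, (j < n)%nat -> (k < n)%nat -> j <> k ->
     forall z1 z2 z3 z4, ~ (cyc4 z1 z2 z3 z4 /\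
        in_interior x j z1 /\ in_interior x k z2 /\
        in_interior x j z3 /\ in_interior x k z4)).

(* pi_j : collapse each component of the closure of S^1 \ I_j(x) to a point
   and rescale by n; explicitly (arc-length parametrisation of the quotient
   from the base point) u |-> n * measure(I_j(x) /\ [0,u]), for u in I. *)
Definition pi_map (n : nat) (x : part_data) (j : nat) (u : R) : R :=
  INR n * rsum (fun k => if Nat.eqb (pd_lab x k) j
                         then Rmin u (pd_t x (S k)) - Rmin u (pd_t x k) else 0)
               (pd_m x).

Definition in_Mon (f : R -> R) : Prop :=
  rcont f /\ nondecr f /\ f 0 = 0 /\ f 1 = 1.

Definition zeta (n : nat) (x : part_data) (f : R -> R) : cmap :=
  fun t j => pi_map n x j (f t).

(* g lies in the image zeta_n(MS(n)); for n = 0, Map(S^1,(S^1)^0) is a point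
   and MS(0) is a point, so the image is everything. *)
Definition in_image (n : nat) (g : cmap) : Prop :=
  n = O \/ exists x f, in_F n x /\ in_Mon f /\ map_eq n g (zeta n x f).

(* condition (1) : each pr_i o g is a weakly monotone degree one map, i.e.
   it has a continuous nondecreasing lift h : I -> R with h 0 = 0, h 1 = 1 *)
Definition cond1 (n : nat) (g : cmap) : Prop :=
  forall i, (i < n)%nat -> exists h : R -> R,
    rcont h /\ nondecr h /\ h 0 = 0 /\ h 1 = 1 /\
    forall t, inI t -> ceq (h t) (g t i).

Definition cond23 (n : nat) (g : cmap) : Prop :=
  exists (m : nat) (s : nat -> R) (sp : nat -> nat),
    subdivision m s /\
    (forall k, (k < m)%nat -> (sp k < n)%nat) /\
    (forall k i, (k < m)%nat -> (i < n)%nat -> i <> sp k ->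
       forall u, s k <= u <= s (S k) -> ceq (g u i) (g (s k) i)) /\
    (forall a b c d, (a < b)%nat -> (b < c)%nat -> (c < d)%nat -> (d < m)%nat ->
       ~ (sp a = sp c /\ sp b = sp d /\ sp a <> sp b)).

(* f o_i g  (0-based index i < k; f of arity k, g of arity l) *)
Definition comp_op (k l i : nat) (f g : cmap) : cmap :=
  fun t p =>
    if Nat.ltb p i then f t p
    else if Nat.ltb p (i + l) then g (frac_part (f t i)) (p - i)%nat
    else f t (p - l + 1)%nat.

Definition id_op : cmap := fun t _ => t.

Definition is_perm (n : nat) (sigma : nat -> nat) : Prop :=
  (forall p, (p < n)%nat -> (sigma p < n)%nat) /\
  (forall p q, (p < n)%nat -> (q < n)%nat -> sigma p = sigma q -> p = q).

Definition perm_act (g : cmap) (sigma : nat -> nat) : cmap :=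
  fun t p => g t (sigma p).

(* Main.v *)
From Pilot Require Import Defs.
From Stdlib Require Import Reals ZArith Arith Lia Lra ClassicalEpsilon.
From Stdlib Require FinFun.
Import Pilot.Defs.
Open Scope R_scope.

Lemma rsum_ext f g m : (forall k, (k < m)%nat -> f k = g k) -> rsum f m = rsum g m.
Proof. induction m; simpl; intros; auto. rewrite IHm by (intros; apply H; lia). rewrite H by lia. auto. Qed.

Lemma rsum_plus f g m : rsum (fun k => f k + g k) m = rsum f m + rsum g m.
Proof. induction m; simpl; [lra|]. rewrite IHm; lra. Qed.

Lemma rsum_minus f g m : rsum (fun k => f k - g k) m = rsum f m - rsum g m.
Proof. induction m; simpl; [lra|]. rewrite IHm; lra. Qed.

Lemma rsum_scal c f m : rsum (fun k => c * f k) m = c * rsum f m.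
Proof. induction m; simpl; [lra|]. rewrite IHm; lra. Qed.

Lemma rsum_zero f m : (forall k, (k < m)%nat -> f k = 0) -> rsum f m = 0.
Proof. induction m; simpl; intros; auto. rewrite IHm by (intros; apply H; lia). rewrite H by lia. lra. Qed.

Lemma rsum_le f g m : (forall k, (k < m)%nat -> f k <= g k) -> rsum f m <= rsum g m.
Proof. induction m; simpl; intros; [lra|]. assert (f m <= g m) by (apply H; lia).
 assert (rsum f m <= rsum g m) by (apply IHm; intros; apply H; lia). lra. Qed.

Lemma rsum_single f n j : (j < n)%nat -> (forall i, (i < n)%nat -> i <> j -> f i = 0) -> rsum f n = f j.
Proof. induction n; intros Hj H; [lia|]. simpl.
 destruct (Nat.eq_dec j n) as [->|Hne].
 - rewrite rsum_zero; [lra|]. intros; apply H; lia.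
 - rewrite IHn by (try lia; intros; apply H; lia). rewrite (H n) by lia. lra. Qed.

Lemma rsum_const c m : rsum (fun _ => c) m = INR m * c.
Proof. induction m; simpl rsum; [simpl; lra|]. rewrite IHm, S_INR; lra. Qed.

Lemma frac_id r : 0 <= r < 1 -> frac_part r = r.
Proof. intros. unfold frac_part. rewrite <- (Int_part_spec r 0); simpl; lra. Qed.

Lemma ceq_refl x : ceq x x.
Proof. exists 0%Z; simpl; lra. Qed.
Lemma ceq_sym x y : ceq x y -> ceq y x.
Proof. intros [k Hk]; exists (- k)%Z; rewrite opp_IZR; lra. Qed.
Lemma ceq_trans x y z : ceq x y -> ceq y z -> ceq x z.
Proof. intros [k Hk] [l Hl]; exists (k + l)%Z; rewrite plus_IZR; lra. Qed.
Lemma ceq_eq x y : x = y -> ceq x y.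
Proof. intros ->; apply ceq_refl. Qed.
Lemma ceq_10 : ceq 1 0.
Proof. exists 1%Z; simpl; lra. Qed.

Lemma frac_ceq x y : ceq x y -> frac_part x = frac_part y.
Proof. intros [k Hk]. unfold frac_part.
 assert (Int_part x = (Int_part y + k)%Z).
 { symmetry; apply Int_part_spec. rewrite plus_IZR.
   destruct (base_Int_part y). lra. }
 rewrite H, plus_IZR. lra. Qed.

Lemma frac_range r : 0 <= frac_part r < 1.
Proof. destruct (base_fp r); lra. Qed.

Lemma frac_ceq_self r : ceq (frac_part r) r.
Proof. unfold frac_part. exists (- Int_part r)%Z. rewrite opp_IZR. lra. Qed.

Definition clamp (s : R) := Rmax 0 (Rmin 1 s).
Lemma clamp_lip s t : Rabs (clamp s - clamp t) <= Rabs (s - t).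
Proof. unfold clamp, Rmax, Rmin. repeat destruct Rle_dec; unfold Rabs; repeat destruct Rcase_abs; lra. Qed.
Lemma clamp_I s : inI (clamp s).
Proof. unfold inI, clamp, Rmax, Rmin. repeat destruct Rle_dec; lra. Qed.
Lemma clamp_id s : inI s -> clamp s = s.
Proof. unfold inI, clamp, Rmax, Rmin. intros. repeat destruct Rle_dec; lra. Qed.

Lemma rcont_ext_continuity h : rcont h -> continuity (fun s => h (clamp s)).
Proof. intros Hh x. unfold continuity_pt, continue_in, limit1_in, limit_in. intros eps He.
 destruct (Hh (clamp x) (clamp_I x) eps He) as [d [Hd Hd2]].
 exists d; split; auto. intros y [_ Hy]. simpl in *. unfold R_dist in *.
 apply Hd2. apply clamp_I. eapply Rle_lt_trans; [apply clamp_lip|]. auto. Qed.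

Lemma rcont_IVT h a b y : rcont h -> inI a -> inI b -> a <= b -> h a <= y <= h b ->
  exists u, a <= u <= b /\ h u = y.
Proof. intros Hh Ha Hb Hab Hy.
 destruct (IVT_cor (fun s => h (clamp s) - y) a b) as [z [Hz1 Hz2]]; auto.
 - apply continuity_minus; [apply rcont_ext_continuity; auto | apply continuity_const; intros ? ?; auto].
 - rewrite !clamp_id by auto. assert (h a - y <= 0) by lra. assert (0 <= h b - y) by lra.
   nra.
 - exists z; split; auto. rewrite clamp_id in Hz2. lra. unfold inI in *; lra. Qed.

Lemma rcont_plus h1 h2 : rcont h1 -> rcont h2 -> rcont (fun t => h1 t + h2 t).
Proof. intros H1 H2 t Ht e He.
 destruct (H1 t Ht (e/2)) as [d1 [Hd1 P1]]; [lra|].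
 destruct (H2 t Ht (e/2)) as [d2 [Hd2 P2]]; [lra|].
 exists (Rmin d1 d2); split; [apply Rmin_pos; auto|]. intros s Hs Hst.
 pose proof (Rmin_l d1 d2); pose proof (Rmin_r d1 d2).
 assert (Rabs (s - t) < d1) by lra.
 assert (Rabs (s - t) < d2) by lra.
 specialize (P1 s Hs H3). specialize (P2 s Hs H4).
 replace (h1 s + h2 s - (h1 t + h2 t)) with ((h1 s - h1 t) + (h2 s - h2 t)) by ring.
 eapply Rle_lt_trans; [apply Rabs_triang|]. lra. Qed.

Lemma rcont_const c : rcont (fun _ => c).
Proof. intros t Ht e He. exists 1; split; [lra|]. intros. replace (c - c) with 0 by ring. rewrite Rabs_R0; auto. Qed.

Lemma rcont_scal c h : rcont h -> rcont (fun t => c * h t).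
Proof. intros Hh t Ht e He.
 destruct (Hh t Ht (e / (Rabs c + 1))) as [d [Hd P]].
 { apply Rdiv_lt_0_compat; auto. pose proof (Rabs_pos c); lra. }
 exists d; split; auto. intros s Hs Hst. specialize (P s Hs Hst).
 replace (c * h s - c * h t) with (c * (h s - h t)) by ring. rewrite Rabs_mult.
 pose proof (Rabs_pos c). pose proof (Rabs_pos (h s - h t)).
 assert (Rabs (h s - h t) * (Rabs c + 1) < e).
 { apply (Rmult_lt_compat_r (Rabs c + 1)) in P; [|lra]. unfold Rdiv in P. rewrite Rmult_assoc, Rinv_l in P; lra. }
 nra. Qed.

Lemma rcont_opp h : rcont h -> rcont (fun t => - h t).
Proof. intros Hh. eapply (rcont_scal (-1)) in Hh. intros t Ht e He. destruct (Hh t Ht e He) as [d [Hd P]].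
 exists d; split; auto. intros s Hs Hst. specialize (P s Hs Hst). replace (- h s - - h t) with (-1 * h s - -1 * h t) by ring. auto. Qed.

Lemma rcont_rsum (H : R -> nat -> R) n : (forall i, (i < n)%nat -> rcont (fun t => H t i)) ->
  rcont (fun t => rsum (H t) n).
Proof. induction n; intros Hc; simpl. apply rcont_const.
 apply rcont_plus. apply IHn; intros; apply Hc; lia. apply Hc; lia. Qed.

Lemma rcont_comp K H : rcont K -> rcont H -> (forall t, inI t -> inI (H t)) -> rcont (fun t => K (H t)).
Proof. intros HK HH HI t Ht e He.
 destruct (HK (H t) (HI t Ht) e He) as [d1 [Hd1 P1]].
 destruct (HH t Ht d1 Hd1) as [d2 [Hd2 P2]].
 exists d2; split; auto. Qed.

Lemma rcont_lip (P : R -> R) L f : 0 < L -> (forall u w, Rabs (P u - P w) <= L * Rabs (u - w)) ->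
  rcont f -> rcont (fun t => P (f t)).
Proof. intros HL HP Hf t Ht e He.
 destruct (Hf t Ht (e / L)) as [d [Hd Q]]. apply Rdiv_lt_0_compat; auto.
 exists d; split; auto. intros s Hs Hst. specialize (Q s Hs Hst).
 eapply Rle_lt_trans; [apply HP|].
 apply (Rmult_lt_compat_l L) in Q; auto. unfold Rdiv in Q. rewrite <- Rmult_assoc, (Rmult_comm L e), Rmult_assoc, Rinv_r in Q; lra. Qed.

Lemma IZR_half k : IZR k = 1/2 -> False.
Proof. intros H. assert (0 < IZR k < 1) by lra. destruct H0.
 apply lt_IZR in H0. apply lt_IZR in H1. lia. Qed.
Lemma IZR_mhalf k : IZR k = -(1/2) -> False.
Proof. intros H. assert (-1 < IZR k < 0) by lra. destruct H0.
 apply lt_IZR in H0. apply lt_IZR in H1. lia. Qed.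

Lemma lift_const h a b : rcont h -> inI a -> inI b ->
  (forall u, a <= u <= b -> ceq (h u) (h a)) -> forall u, a <= u <= b -> h u = h a.
Proof. intros Hh Ha Hb Hc u Hu.
 destruct (Hc u Hu) as [k Hk].
 destruct (Z.eq_dec k 0) as [->|Hk0]. simpl in Hk; lra.
 assert (Hu' : inI u) by (unfold inI in *; lra).
 destruct (Z_lt_le_dec 0 k) as [Hp|Hn].
 - apply IZR_lt in Hp. assert (1 <= IZR k). { apply IZR_le. apply lt_IZR in Hp. lia. }
   destruct (rcont_IVT h a u (h a + 1/2) Hh Ha Hu') as [v [Hv Hv2]]; [lra|lra|].
   destruct (Hc v ltac:(lra)) as [k' Hk']. exfalso. apply (IZR_half k'). lra.
 - assert (IZR k <= -1). { apply IZR_le. lia. }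
   destruct (rcont_IVT (fun s => - h s) a u (- h a + 1/2) (rcont_opp h Hh) Ha Hu') as [v [Hv Hv2]]; [lra|lra|].
   destruct (Hc v ltac:(lra)) as [k' Hk']. exfalso. apply (IZR_mhalf k'). lra. Qed.

Lemma sub_mono m t : subdivision m t -> forall p q, (p <= q)%nat -> (q <= m)%nat -> t p <= t q.
Proof. intros [_ [_ [_ H]]] p q Hpq Hq. induction q.
 - assert (p = 0%nat) by lia; subst; lra.
 - destruct (Nat.eq_dec p (S q)) as [->|Hne]; [lra|].
   specialize (IHq ltac:(lia) ltac:(lia)). specialize (H q ltac:(lia)). lra. Qed.

Lemma sub_smono m t : subdivision m t -> forall p q, (p < q)%nat -> (q <= m)%nat -> t p < t q.
Proof. intros Hs p q Hpq Hq. pose proof (sub_mono m t Hs (S p) q Hpq Hq) as Hm. destruct Hs as [a [b [c H]]].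
 specialize (H p ltac:(lia)). lra. Qed.

Lemma sub_range m t : subdivision m t -> forall p, (p <= m)%nat -> 0 <= t p <= 1.
Proof. intros Hs p Hp. pose proof (sub_mono m t Hs 0 p ltac:(lia) Hp).
 pose proof (sub_mono m t Hs p m Hp ltac:(lia)). destruct Hs as [_ [E0 [E1 _]]]. lra. Qed.

Lemma sub_idx m t : subdivision m t -> forall p q, (p <= m)%nat -> (q <= m)%nat -> t p < t q -> (p < q)%nat.
Proof. intros Hs p q Hp Hq H. destruct (le_lt_dec q p); auto.
 pose proof (sub_mono m t Hs q p l Hp). lra. Qed.

Lemma sub_locate m t : subdivision m t -> forall u, 0 <= u < 1 ->
  exists K, (K < m)%nat /\ t K <= u < t (S K).
Proof. intros Hs u Hu. destruct Hs as [Hm [H0 [H1 Hinc]]].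
 assert (forall p, (p <= m)%nat -> u < t p -> exists K, (K < p)%nat /\ t K <= u < t (S K)).
 { induction p; intros Hp Hlt. lra.
   destruct (Rlt_le_dec u (t p)).
   - destruct (IHp ltac:(lia) r) as [K [HK1 HK2]]. exists K; split; auto.
   - exists p; split; auto. }
 destruct (H m ltac:(lia) ltac:(lra)) as [K [HK1 HK2]]. exists K; auto. Qed.

Lemma sub_locate_closed m t : subdivision m t -> forall u, 0 <= u <= 1 ->
  exists K, (K < m)%nat /\ t K <= u <= t (S K).
Proof. intros Hs u Hu. destruct (Req_dec u 1) as [->|Hne].
 - pose proof (sub_range m t Hs (m-1)%nat). destruct Hs as [Hm [H0 [H1 Hinc]]]. exists (m - 1)%nat. split; [lia|].
   replace (S (m-1)) with m by lia. rewrite H1. specialize (H ltac:(lia)). lra.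
 - destruct (sub_locate m t Hs u ltac:(lra)) as [K [? ?]]. exists K; split; auto; lra. Qed.

Definition pterm (x : part_data) (j : nat) (v : R) (k : nat) : R :=
  if Nat.eqb (pd_lab x k) j then Rmin v (pd_t x (S k)) - Rmin v (pd_t x k) else 0.

Lemma pi_map_eq n x j v : pi_map n x j v = INR n * rsum (pterm x j v) (pd_m x).
Proof. reflexivity. Qed.

Lemma rsum_abs_diff f g m : Rabs (rsum f m - rsum g m) <= rsum (fun k => Rabs (f k - g k)) m.
Proof. induction m; simpl. rewrite Rminus_0_r, Rabs_R0; lra.
 replace (rsum f m + f m - (rsum g m + g m)) with ((rsum f m - rsum g m) + (f m - g m)) by ring.
 eapply Rle_trans; [apply Rabs_triang|]. lra. Qed.

Lemma Rmin_lip u w c : Rabs (Rmin u c - Rmin w c) <= Rabs (u - w).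
Proof. unfold Rmin; repeat destruct Rle_dec; unfold Rabs; repeat destruct Rcase_abs; lra. Qed.

Lemma pterm_lip x j u w k : Rabs (pterm x j u k - pterm x j w k) <= 2 * Rabs (u - w).
Proof. unfold pterm. destruct Nat.eqb. 
 - replace (Rmin u (pd_t x (S k)) - Rmin u (pd_t x k) - (Rmin w (pd_t x (S k)) - Rmin w (pd_t x k)))
   with ((Rmin u (pd_t x (S k)) - Rmin w (pd_t x (S k))) - (Rmin u (pd_t x k) - Rmin w (pd_t x k))) by ring.
   unfold Rminus at 1. eapply Rle_trans; [apply Rabs_triang|]. rewrite Rabs_Ropp.
   pose proof (Rmin_lip u w (pd_t x (S k))). pose proof (Rmin_lip u w (pd_t x k)). lra.
 - rewrite Rminus_0_r, Rabs_R0. pose proof (Rabs_pos (u - w)); lra. Qed.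

Lemma pi_map_lip n x j u w : Rabs (pi_map n x j u - pi_map n x j w) <= (INR n * (2 * INR (pd_m x)) + 1) * Rabs (u - w).
Proof. rewrite !pi_map_eq. rewrite <- Rmult_minus_distr_l, Rabs_mult, Rabs_right by (apply Rle_ge, pos_INR).
 pose proof (rsum_abs_diff (pterm x j u) (pterm x j w) (pd_m x)).
 assert (rsum (fun k => Rabs (pterm x j u k - pterm x j w k)) (pd_m x) <= INR (pd_m x) * (2 * Rabs (u - w))).
 { rewrite <- rsum_const. apply rsum_le. intros; apply pterm_lip. }
 pose proof (pos_INR n). pose proof (pos_INR (pd_m x)). pose proof (Rabs_pos (u - w)).
 pose proof (Rabs_pos (rsum (pterm x j u) (pd_m x) - rsum (pterm x j w) (pd_m x))).
 assert (INR n * Rabs (rsum (pterm x j u) (pd_m x) - rsum (pterm x j w) (pd_m x)) <= INR n * (INR (pd_m x) * (2 * Rabs (u - w)))).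
 { apply Rmult_le_compat_l; lra. }
 nra. Qed.

Section Fwd.
Variables (n : nat) (x : part_data).
Hypothesis Hn : (0 < n)%nat.
Hypothesis HF : in_F n x.
Let m := pd_m x.
Let t := pd_t x.
Let lab := pd_lab x.

Lemma HS : subdivision m t.
Proof. apply HF. Qed.

Lemma pterm_mono j u w k : (k < m)%nat -> u <= w -> pterm x j u k <= pterm x j w k.
Proof. intros Hk Huw. unfold pterm. pose proof (proj2 (proj2 (proj2 HS)) k Hk). fold t.
 destruct Nat.eqb; [|lra]. unfold Rmin; repeat destruct Rle_dec; lra. Qed.

Lemma pi_map_mono j u w : u <= w -> pi_map n x j u <= pi_map n x j w.
Proof. intros. rewrite !pi_map_eq. apply Rmult_le_compat_l. apply pos_INR.
 apply rsum_le; intros; apply pterm_mono; auto. Qed.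

Lemma pi_map_0 j : pi_map n x j 0 = 0.
Proof. rewrite pi_map_eq. rewrite rsum_zero. ring. intros k Hk. unfold pterm.
 pose proof (sub_range m t HS k ltac:(lia)). pose proof (sub_range m t HS (S k) ltac:(lia)). fold t.
 destruct Nat.eqb; auto. rewrite !Rmin_left by lra. ring. Qed.

Lemma pi_map_1 j : (j < n)%nat -> pi_map n x j 1 = 1.
Proof. intros Hj. rewrite pi_map_eq. destruct HF as [_ [_ [Hm _]]]. specialize (Hm j Hj).
 unfold piece_measure in Hm. rewrite (rsum_ext _ (fun k => if Nat.eqb (pd_lab x k) j then pd_t x (S k) - pd_t x k else 0)).
 rewrite Hm. field. apply not_0_INR; lia.
 intros k Hk. unfold pterm.
 pose proof (sub_range m t HS k ltac:(lia)). pose proof (sub_range m t HS (S k) ltac:(lia)). fold t.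
 destruct Nat.eqb; auto. rewrite !Rmin_right by lra. ring. Qed.

Lemma pterm_flat j v q k : (q < m)%nat -> (k < m)%nat -> k <> q -> t q <= v <= t (S q) ->
  pterm x j v k = pterm x j (t q) k.
Proof. intros Hq Hk Hkq Hv. unfold pterm. fold t. destruct Nat.eqb; auto.
 destruct (lt_dec k q).
 - pose proof (sub_mono m t HS (S k) q ltac:(lia) ltac:(lia)). pose proof (sub_mono m t HS k (S k) ltac:(lia) ltac:(lia)).
   rewrite !Rmin_right by lra. auto.
 - pose proof (sub_mono m t HS (S q) k ltac:(lia) ltac:(lia)). pose proof (sub_mono m t HS k (S k) ltac:(lia) ltac:(lia)).
   rewrite !Rmin_left by lra. ring. Qed.

Lemma pi_map_flat j v q : (q < m)%nat -> lab q <> j -> t q <= v <= t (S q) ->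
  pi_map n x j v = pi_map n x j (t q).
Proof. intros Hq Hl Hv. rewrite !pi_map_eq. f_equal. apply rsum_ext. intros k Hk.
 destruct (Nat.eq_dec k q) as [->|Hne].
 - unfold pterm. replace (Nat.eqb (pd_lab x q) j) with false; auto. symmetry; apply Nat.eqb_neq; auto.
 - apply pterm_flat; auto. Qed.

Lemma mid_interior q : (q < m)%nat -> in_interior x (lab q) ((t q + t (S q)) / 2).
Proof. intros Hq. pose proof (proj2 (proj2 (proj2 HS)) q Hq).
 pose proof (sub_range m t HS q ltac:(lia)). pose proof (sub_range m t HS (S q) ltac:(lia)).
 exists ((t (S q) - t q) / 2). split; [lra|]. intros w Hw.
 assert (t q < w < t (S q)). { unfold Rabs in Hw; destruct Rcase_abs; lra. }
 unfold in_piece. rewrite frac_id by lra. exists q. repeat split; auto; left; fold t; lra. Qed.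

Lemma lab_noncross : forall a b c d, (a < b)%nat -> (b < c)%nat -> (c < d)%nat -> (d < m)%nat ->
  ~ (lab a = lab c /\ lab b = lab d /\ lab a <> lab b).
Proof. intros a b c d Hab Hbc Hcd Hd [E1 [E2 E3]].
 destruct HF as [_ [Hl [_ [_ Hx]]]].
 apply (Hx (lab a) (lab b) (Hl a ltac:(fold m; lia)) (Hl b ltac:(fold m; lia)) E3
   ((t a + t (S a))/2) ((t b + t (S b))/2) ((t c + t (S c))/2) ((t d + t (S d))/2)).
 assert (Hmid : forall q, (q < m)%nat -> 0 <= (t q + t (S q))/2 < 1 /\ t q < (t q + t (S q))/2 < t (S q)).
 { intros q Hq. pose proof (proj2 (proj2 (proj2 HS)) q Hq).
   pose proof (sub_range m t HS q ltac:(lia)). pose proof (sub_range m t HS (S q) ltac:(lia)). lra. }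
 pose proof (Hmid a ltac:(lia)). pose proof (Hmid b ltac:(lia)). pose proof (Hmid c ltac:(lia)). pose proof (Hmid d ltac:(lia)).
 pose proof (sub_mono m t HS (S a) b ltac:(lia) ltac:(lia)).
 pose proof (sub_mono m t HS (S b) c ltac:(lia) ltac:(lia)).
 pose proof (sub_mono m t HS (S c) d ltac:(lia) ltac:(lia)).
 split; [split; [tauto| left; lra]|].
 split; [apply mid_interior; lia|]. split; [apply mid_interior; lia|].
 split; [rewrite E1; apply mid_interior; lia|]. rewrite E2; apply mid_interior; lia. Qed.

End Fwd.

Definition liftok (n : nat) (H : R -> nat -> R) : Prop :=
  forall j, (j < n)%nat -> rcont (fun t => H t j) /\ nondecr (fun t => H t j) /\ H 0 j = 0 /\ H 1 j = 1.
Definition structok (n : nat) (H : R -> nat -> R) (m : nat) (s : nat -> R) (sp : nat -> nat) : Prop :=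
  (forall k, (k < m)%nat -> (sp k < n)%nat) /\
  (forall q j, (q < m)%nat -> (j < n)%nat -> j <> sp q -> forall u, s q <= u <= s (S q) -> H u j = H (s q) j).
Definition noncross (m : nat) (sp : nat -> nat) : Prop :=
  forall a b c d, (a < b)%nat -> (b < c)%nat -> (c < d)%nat -> (d < m)%nat ->
    ~ (sp a = sp c /\ sp b = sp d /\ sp a <> sp b).

Lemma liftok_I n H j t : liftok n H -> (j < n)%nat -> inI t -> inI (H t j).
Proof. intros HL Hj Ht. destruct (HL j Hj) as [_ [Hm [H0 H1]]].
 pose proof (Hm 0 t ltac:(unfold inI; lra) Ht ltac:(unfold inI in Ht; lra)).
 pose proof (Hm t 1 Ht ltac:(unfold inI; lra) ltac:(unfold inI in Ht; lra)). simpl in *. unfold inI; lra. Qed.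

Theorem forward n x f : (0 < n)%nat -> in_F n x -> in_Mon f ->
  liftok n (fun t j => pi_map n x j (f t)) /\
  exists s, subdivision (pd_m x) s /\ structok n (fun t j => pi_map n x j (f t)) (pd_m x) s (pd_lab x) /\
            noncross (pd_m x) (pd_lab x).
Proof. intros Hn HF [Hfc [Hfm [Hf0 Hf1]]].
 pose proof (HS n x HF) as HSx.
 assert (HfI : forall u, inI u -> inI (f u)).
 { intros u Hu. pose proof (Hfm 0 u ltac:(unfold inI; lra) Hu ltac:(unfold inI in Hu; lra)).
   pose proof (Hfm u 1 Hu ltac:(unfold inI; lra) ltac:(unfold inI in Hu; lra)). unfold inI; lra. }
 split.
 - intros j Hj. split; [|split; [|split]].
   + eapply rcont_lip; [| apply pi_map_lip | auto]. pose proof (pos_INR n); pose proof (pos_INR (pd_m x)); nra.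
   + intros u w Hu Hw Huw. apply pi_map_mono; auto.
   + simpl. rewrite Hf0. apply pi_map_0; auto.
   + simpl. rewrite Hf1. apply pi_map_1; auto.
 - set (m := pd_m x). set (t := pd_t x).
   set (s := fun q => if Nat.eqb q 0 then 0 else if Nat.eqb q m then 1 else
                     epsilon (inhabits 0) (fun u => inI u /\ f u = t q)).
   assert (Hs : forall q, (q <= m)%nat -> inI (s q) /\ f (s q) = t q).
   { intros q Hq. unfold s. pose proof (sub_range m t HSx q Hq). destruct HSx as [Hm0 [Ht0 [Ht1 _]]].
     destruct (Nat.eqb_spec q 0) as [->|H0].
     { split; [unfold inI; lra|]. rewrite Hf0; auto. }
     destruct (Nat.eqb_spec q m) as [->|H1].
     { split; [unfold inI; lra|]. rewrite Hf1; auto. }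
     apply (epsilon_spec (inhabits 0) (fun u => inI u /\ f u = t q)).
     destruct (rcont_IVT f 0 1 (t q) Hfc) as [u [Hu1 Hu2]]; try (unfold inI; lra).
     exists u; split; auto; unfold inI; lra. }
   exists s. split; [|split; [split|]].
   + destruct HSx as [Hm0 [Ht0 [Ht1 Hinc]]]. split; auto. split; [reflexivity|]. split.
     { unfold s. destruct (Nat.eqb_spec m 0); [lia|]. rewrite Nat.eqb_refl; auto. }
     intros k Hk. destruct (Hs k ltac:(lia)) as [Hk1 Hk2]. destruct (Hs (S k) ltac:(lia)) as [Hk3 Hk4].
     destruct (Rlt_le_dec (s k) (s (S k))); auto.
     pose proof (Hfm _ _ Hk3 Hk1 r). specialize (Hinc k Hk). fold t in Hinc. lra.
   + intros k Hk. apply HF; auto.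
   + intros q j Hq Hj Hne u Hu.
     destruct (Hs q ltac:(lia)) as [Hk1 Hk2]. destruct (Hs (S q) ltac:(lia)) as [Hk3 Hk4].
     assert (HuI : inI u) by (unfold inI in *; lra).
     pose proof (Hfm _ _ Hk1 HuI ltac:(lra)). pose proof (Hfm _ _ HuI Hk3 ltac:(lra)).
     rewrite Hk2. apply (pi_map_flat n x Hn HF j (f u) q); auto. fold t; lra.
   + intros a b c d H1 H2 H3 H4. apply (lab_noncross n x Hn HF); auto. Qed.

Section Interior.
Variable x : part_data.
Hypothesis HS : subdivision (pd_m x) (pd_t x).
Let M := pd_m x.
Let t := pd_t x.
Let lab := pd_lab x.

Lemma interior_lab j z K : in_interior x j z -> (K < M)%nat -> t K <= frac_part z < t (S K) -> lab K = j.
Proof. intros [eps [He Hw]] HK Hz.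
 pose proof (frac_range z) as Hfr. pose proof (frac_ceq_self z) as Hfs.
 remember (frac_part z) as u0 eqn:Hu0. set (d := Rmin eps (t (S K) - u0) / 2).
 assert (Hd : 0 < d /\ d < eps /\ u0 + d < t (S K)).
 { unfold d. pose proof (Rmin_l eps (t (S K) - u0)). pose proof (Rmin_r eps (t (S K) - u0)).
   assert (0 < Rmin eps (t (S K) - u0)) by (apply Rmin_pos; lra). lra. }
 specialize (Hw (z + d) ltac:(replace (z + d - z) with d by ring; rewrite Rabs_right; lra)).
 pose proof (sub_range M t HS (S K) ltac:(lia)).
 assert (Hf : frac_part (z + d) = u0 + d).
 { rewrite <- (frac_id (u0 + d)) by lra. apply frac_ceq.
   destruct Hfs as [k Hk]. exists (-k)%Z. rewrite opp_IZR. lra. }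
 destruct Hw as [K' [HK' [HL Hin]]]. rewrite Hf in Hin.
 destruct Hin as [Hin|[Hin _]]; [|lra].
 destruct (lt_eq_lt_dec K' K) as [[Hlt| ->]|Hgt].
 - pose proof (sub_mono M t HS (S K') K ltac:(lia) ltac:(lia)). fold t in Hin. lra.
 - auto.
 - pose proof (sub_mono M t HS (S K) K' ltac:(lia) ltac:(lia)). fold t in Hin. lra. Qed.

Lemma loc_exists z : exists K, (K < M)%nat /\ t K <= frac_part z < t (S K).
Proof. apply sub_locate; auto. apply frac_range. Qed.

Lemma loc_mono z z' K K' : (K < M)%nat -> (K' < M)%nat -> t K <= z < t (S K) -> t K' <= z' < t (S K') -> z < z' -> (K <= K')%nat.
Proof. intros HK HK' Hz Hz' Hzz. destruct (le_lt_dec K K'); auto.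
 pose proof (sub_mono M t HS (S K') K ltac:(lia) ltac:(lia)). lra. Qed.

Lemma interior_disjoint : forall j k z, j <> k -> ~ (in_interior x j z /\ in_interior x k z).
Proof. intros j k z Hjk [H1 H2]. destruct (loc_exists z) as [K [HK Hz]].
 apply Hjk. rewrite <- (interior_lab j z K), <- (interior_lab k z K); auto. Qed.

Lemma cross4 z1 z2 z3 z4 a b : a <> b -> noncross M lab ->
  0 <= z1 -> z1 < z2 -> z2 < z3 -> z3 < z4 -> z4 < 1 ->
  in_interior x a z1 -> in_interior x b z2 -> in_interior x a z3 -> in_interior x b z4 -> False.
Proof. intros Hab HN H0 H12 H23 H34 H4 I1 I2 I3 I4.
 destruct (sub_locate M t HS z1 ltac:(lra)) as [K1 [HK1 L1]].
 destruct (sub_locate M t HS z2 ltac:(lra)) as [K2 [HK2 L2]].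
 destruct (sub_locate M t HS z3 ltac:(lra)) as [K3 [HK3 L3]].
 destruct (sub_locate M t HS z4 ltac:(lra)) as [K4 [HK4 L4]].
 assert (E1 : lab K1 = a) by (apply (interior_lab a z1); auto; rewrite frac_id; lra).
 assert (E2 : lab K2 = b) by (apply (interior_lab b z2); auto; rewrite frac_id; lra).
 assert (E3 : lab K3 = a) by (apply (interior_lab a z3); auto; rewrite frac_id; lra).
 assert (E4 : lab K4 = b) by (apply (interior_lab b z4); auto; rewrite frac_id; lra).
 pose proof (loc_mono z1 z2 K1 K2 HK1 HK2 L1 L2 H12).
 pose proof (loc_mono z2 z3 K2 K3 HK2 HK3 L2 L3 H23).
 pose proof (loc_mono z3 z4 K3 K4 HK3 HK4 L3 L4 H34).
 assert (K1 <> K2) by (intro; subst; congruence).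
 assert (K2 <> K3) by (intro; subst; congruence).
 assert (K3 <> K4) by (intro; subst; congruence).
 apply (HN K1 K2 K3 K4); try lia; rewrite E1, E2, E3, E4; auto. Qed.

Lemma cyc_clause : noncross M lab -> forall j k, j <> k ->
  forall z1 z2 z3 z4, ~ (cyc4 z1 z2 z3 z4 /\
        in_interior x j z1 /\ in_interior x k z2 /\ in_interior x j z3 /\ in_interior x k z4).
Proof. intros HN j k Hjk z1 z2 z3 z4 [[[R1 [R2 [R3 R4]]] C] [I1 [I2 [I3 I4]]]].
 destruct C as [C|[C|[C|C]]].
 - apply (cross4 z1 z2 z3 z4 j k); auto; lra.
 - apply (cross4 z2 z3 z4 z1 k j); auto; lra.
 - apply (cross4 z3 z4 z1 z2 j k); auto; lra.
 - apply (cross4 z4 z1 z2 z3 k j); auto; lra. Qed.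

End Interior.

Lemma in_F_of n x : subdivision (pd_m x) (pd_t x) ->
  (forall k, (k < pd_m x)%nat -> (pd_lab x k < n)%nat) ->
  (forall j, (j < n)%nat -> piece_measure x j = 1 / INR n) ->
  noncross (pd_m x) (pd_lab x) -> in_F n x.
Proof. intros HS Hl Hm HN. split; auto. split; auto. split; auto. split.
 - intros j k z _ _ Hjk. apply interior_disjoint; auto.
 - intros j k _ _ Hjk. apply cyc_clause; auto. Qed.

Definition nsub (m : nat) (s : nat -> R) : Prop :=
  (0 < m)%nat /\ s O = 0 /\ s m = 1 /\ forall k, (k < m)%nat -> s k <= s (S k).

Definition actnc (H : R -> nat -> R) (m : nat) (s : nat -> R) (sp : nat -> nat) : Prop :=
  forall a b c d, (a < b)%nat -> (b < c)%nat -> (c < d)%nat -> (d < m)%nat ->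
    H (s a) (sp a) < H (s (S a)) (sp a) -> H (s b) (sp b) < H (s (S b)) (sp b) ->
    H (s c) (sp c) < H (s (S c)) (sp c) -> H (s d) (sp d) < H (s (S d)) (sp d) ->
    ~ (sp a = sp c /\ sp b = sp d /\ sp a <> sp b).

Lemma nsub_mono m s : nsub m s -> forall p q, (p <= q)%nat -> (q <= m)%nat -> s p <= s q.
Proof. intros [_ [_ [_ H]]] p q Hpq Hq. induction q.
 - assert (p = 0%nat) by lia; subst; lra.
 - destruct (Nat.eq_dec p (S q)) as [->|Hne]; [lra|].
   specialize (IHq ltac:(lia) ltac:(lia)). specialize (H q ltac:(lia)). lra. Qed.

Lemma nsub_I m s : nsub m s -> forall p, (p <= m)%nat -> inI (s p).
Proof. intros Hs p Hp. pose proof (nsub_mono m s Hs 0 p ltac:(lia) Hp).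
 pose proof (nsub_mono m s Hs p m Hp ltac:(lia)). destruct Hs as [_ [E0 [E1 _]]]. unfold inI; lra. Qed.

Lemma sub_nsub m s : subdivision m s -> nsub m s.
Proof. intros [a [b [c d]]]. split; auto. split; auto. split; auto. intros k Hk; specialize (d k Hk); lra. Qed.

Lemma rsum_telescope a m : rsum (fun q => a (S q) - a q) m = a m - a O.
Proof. induction m; simpl; [lra|]. rewrite IHm; lra. Qed.

Section Key.
Variables (n : nat) (H : R -> nat -> R) (m : nat) (s : nat -> R) (sp : nat -> nat).
Hypothesis Hn : (0 < n)%nat.
Hypothesis HL : liftok n H.
Hypothesis HS : nsub m s.
Hypothesis HT : structok n H m s sp.
Hypothesis HN : actnc H m s sp.

Definition kf (u : R) : R := rsum (H u) n / INR n.
Definition KF (k : nat) : R := kf (s k).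

Lemma INRn_pos : 0 < INR n.
Proof. apply lt_0_INR; auto. Qed.

Lemma kf_diff_gen q u w j : (q < m)%nat -> (j < n)%nat -> s q <= u <= s (S q) -> s q <= w <= s (S q) ->
  INR n * (if Nat.eqb (sp q) j then kf u - kf w else 0) = H u j - H w j.
Proof. intros Hq Hj Hu Hw. destruct HT as [Hsp Hc].
 assert (Hd : INR n * (kf u - kf w) = H u (sp q) - H w (sp q)).
 { unfold kf. field_simplify; [|apply not_0_INR; lia].
   rewrite <- rsum_minus. apply (rsum_single (fun k => H u k - H w k)); auto.
   intros i Hi Hne. rewrite (Hc q i Hq Hi Hne u Hu), (Hc q i Hq Hi Hne w Hw). ring. }
 destruct (Nat.eqb_spec (sp q) j) as [<-|Hne]; auto.
 rewrite (Hc q j Hq Hj (not_eq_sym Hne) u Hu), (Hc q j Hq Hj (not_eq_sym Hne) w Hw). ring. Qed.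

Lemma kf_mono u w : inI u -> inI w -> u <= w -> kf u <= kf w.
Proof. intros Hu Hw Huw. unfold kf. apply Rmult_le_compat_r.
 left; apply Rinv_0_lt_compat, INRn_pos. apply rsum_le. intros j Hj. apply (HL j Hj); auto. Qed.

Lemma kf_0 : kf 0 = 0.
Proof. unfold kf. rewrite rsum_zero. unfold Rdiv; ring. intros j Hj; apply (HL j Hj). Qed.
Lemma kf_1 : kf 1 = 1.
Proof. unfold kf. rewrite (rsum_ext _ (fun _ => 1)). rewrite rsum_const. field. apply not_0_INR; lia.
 intros j Hj; apply (HL j Hj). Qed.

Lemma kf_Mon : in_Mon kf.
Proof. split; [|split; [|split]].
 - unfold kf. unfold Rdiv. apply (rcont_lip (fun r => r * / INR n) (/ INR n + 1)).
   pose proof (Rinv_0_lt_compat _ INRn_pos); lra.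
   intros u w. replace (u * / INR n - w * / INR n) with (/ INR n * (u - w)) by ring.
   rewrite Rabs_mult, Rabs_right. pose proof (Rabs_pos (u - w)). nra. left; apply Rinv_0_lt_compat, INRn_pos.
   apply rcont_rsum. intros i Hi; apply (HL i Hi).
 - intros u w Hu Hw Huw; apply kf_mono; auto.
 - apply kf_0.
 - apply kf_1. Qed.

Lemma KF_step k : (k < m)%nat -> KF k <= KF (S k).
Proof. intros Hk. apply kf_mono; try apply (nsub_I m s HS); try lia. apply HS; auto. Qed.

Lemma KF_mono p q : (p <= q)%nat -> (q <= m)%nat -> KF p <= KF q.
Proof. intros. apply kf_mono; try apply (nsub_I m s HS); try lia. apply (nsub_mono m s HS); auto. Qed.

Lemma KF_0 : KF 0 = 0.
Proof. unfold KF. destruct HS as [_ [-> _]]. apply kf_0. Qed.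
Lemma KF_m : KF m = 1.
Proof. unfold KF. destruct HS as [_ [_ [-> _]]]. apply kf_1. Qed.

Lemma act_KF q : (q < m)%nat -> KF q < KF (S q) -> H (s q) (sp q) < H (s (S q)) (sp q).
Proof. intros Hq Hlt. destruct HT as [Hsp _].
 pose proof (kf_diff_gen q (s (S q)) (s q) (sp q) Hq (Hsp q Hq)).
 rewrite Nat.eqb_refl in H0. pose proof (HS) as [_ [_ [_ Hi]]]. specialize (Hi q Hq).
 unfold KF in Hlt. pose proof INRn_pos. assert (0 < INR n * (kf (s (S q)) - kf (s q))) by nra.
 rewrite H0 in H2 by lra. lra. Qed.

Definition actb (k : nat) : bool := if Rlt_dec (KF k) (KF (S k)) then true else false.

Lemma actb_true k : actb k = true -> KF k < KF (S k).
Proof. unfold actb; destruct Rlt_dec; congruence. Qed.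
Lemma actb_false k : (k < m)%nat -> actb k = false -> KF k = KF (S k).
Proof. unfold actb; destruct Rlt_dec; try congruence. intros Hk _. pose proof (KF_step k Hk). lra. Qed.

Fixpoint cnt (k : nat) : nat := match k with O => O | S k' => (cnt k' + (if actb k' then 1 else 0))%nat end.

Lemma cnt_mono p q : (p <= q)%nat -> (cnt p <= cnt q)%nat.
Proof. induction q; intros Hpq. assert (p = 0%nat) by lia; subst; auto.
 destruct (Nat.eq_dec p (S q)) as [->|Hne]; auto. simpl. specialize (IHq ltac:(lia)). lia. Qed.

Lemma cnt_F_aux p q : (p <= q)%nat -> (q <= m)%nat -> cnt p = cnt q -> KF p = KF q.
Proof. induction q; intros Hpq Hq Hc. assert (p = 0%nat) by lia; subst; auto.
 destruct (Nat.eq_dec p (S q)) as [->|Hne]; auto.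
 simpl in Hc. pose proof (cnt_mono p q ltac:(lia)).
 destruct (actb q) eqn:E. lia.
 rewrite <- (actb_false q) by (auto; lia). apply IHq; lia. Qed.

Lemma cnt_F p q : (p <= m)%nat -> (q <= m)%nat -> cnt p = cnt q -> KF p = KF q.
Proof. intros. destruct (le_lt_dec p q). apply cnt_F_aux; auto. symmetry; apply cnt_F_aux; auto; lia. Qed.

Definition MM := cnt m.

Lemma cnt_ex K p : (K < cnt p)%nat -> exists q, (q < p)%nat /\ actb q = true /\ cnt q = K.
Proof. induction p; simpl; intros HK. lia.
 destruct (le_lt_dec (cnt p) K).
 - destruct (actb p) eqn:E; [|lia]. exists p. repeat split; auto; lia.
 - destruct (IHp l) as [q [? [? ?]]]. exists q; repeat split; auto. Qed.

Lemma cnt_uniq q q' : actb q = true -> actb q' = true -> cnt q = cnt q' -> q = q'.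
Proof. intros Hq Hq' Hc. destruct (lt_eq_lt_dec q q') as [[Hlt|]|Hgt]; auto.
 - pose proof (cnt_mono (S q) q' Hlt). simpl in H0. rewrite Hq in H0. lia.
 - pose proof (cnt_mono (S q') q Hgt). simpl in H0. rewrite Hq' in H0. lia. Qed.

Definition idx (K : nat) : nat := epsilon (inhabits 0%nat) (fun q => (q < m)%nat /\ actb q = true /\ cnt q = K).

Lemma idx_spec K : (K < MM)%nat -> (idx K < m)%nat /\ actb (idx K) = true /\ cnt (idx K) = K.
Proof. intros HK. unfold idx. apply (epsilon_spec (inhabits 0%nat) (fun q => (q < m)%nat /\ actb q = true /\ cnt q = K)).
 apply cnt_ex; auto. Qed.

Lemma idx_cnt q : (q < m)%nat -> actb q = true -> idx (cnt q) = q.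
Proof. intros Hq Ha. assert (cnt q < MM)%nat.
 { unfold MM. pose proof (cnt_mono (S q) m Hq). simpl in H0. rewrite Ha in H0. lia. }
 destruct (idx_spec (cnt q) H0) as [? [? ?]]. apply cnt_uniq; auto. Qed.

Lemma idx_smono K K' : (K < K')%nat -> (K' < MM)%nat -> (idx K < idx K')%nat.
Proof. intros. destruct (idx_spec K ltac:(lia)) as [? [? E]]. destruct (idx_spec K' ltac:(lia)) as [? [? E']].
 destruct (le_lt_dec (idx K') (idx K)); auto. pose proof (cnt_mono _ _ l). lia. Qed.

Lemma cnt_S_act q : actb q = true -> cnt (S q) = S (cnt q).
Proof. intros. simpl. rewrite H0. lia. Qed.

Definition xt (K : nat) : R := if Nat.ltb K MM then KF (idx K) else 1.
Definition xpart : part_data := PD MM xt (fun K => sp (idx K)).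

Lemma xt_lt K : (K < MM)%nat -> xt K = KF (idx K).
Proof. intros. unfold xt. destruct (Nat.ltb_spec K MM); auto; lia. Qed.

Lemma xt_S K : (K < MM)%nat -> xt (S K) = KF (S (idx K)).
Proof. intros HK. destruct (idx_spec K HK) as [Hi [Ha Hc]]. unfold xt.
 destruct (Nat.ltb_spec (S K) MM).
 - destruct (idx_spec (S K) H0) as [Hi' [Ha' Hc']]. apply cnt_F; try lia.
   rewrite Hc', cnt_S_act; auto.
 - rewrite <- KF_m. apply cnt_F; try lia. rewrite cnt_S_act; auto. unfold MM in *. 
   pose proof (cnt_mono (S (idx K)) m Hi). rewrite cnt_S_act in H1; auto. lia. Qed.

Lemma MM_pos : (0 < MM)%nat.
Proof. destruct (Nat.eq_dec MM 0); [|lia]. exfalso.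
 pose proof (cnt_F 0 m ltac:(lia) ltac:(lia)). rewrite KF_0, KF_m in H0.
 unfold MM in e. simpl in H0. specialize (H0 ltac:(lia)). lra. Qed.

Lemma xsub : subdivision MM xt.
Proof. split; [apply MM_pos|]. split; [|split].
 - rewrite xt_lt by apply MM_pos. destruct (idx_spec 0 MM_pos) as [? [? Hc]].
   rewrite <- KF_0. apply cnt_F; auto; lia.
 - unfold xt. destruct (Nat.ltb_spec MM MM); auto; lia.
 - intros K HK. rewrite xt_lt, xt_S by auto. destruct (idx_spec K HK) as [? [? ?]]. apply actb_true; auto. Qed.

Lemma reindex (G : nat -> R) : (forall q, (q < m)%nat -> actb q = false -> G q = 0) ->
  forall p, (p <= m)%nat -> rsum (fun K => G (idx K)) (cnt p) = rsum G p.
Proof. intros HG. induction p; intros Hp; simpl; auto.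
 destruct (actb p) eqn:E.
 - rewrite Nat.add_1_r. simpl. rewrite IHp by lia. rewrite idx_cnt by (auto; lia). auto.
 - rewrite Nat.add_0_r. rewrite IHp by lia. rewrite HG by (auto; lia). ring. Qed.

Lemma H_piece_diff q j : (q < m)%nat -> (j < n)%nat ->
  INR n * (if Nat.eqb (sp q) j then KF (S q) - KF q else 0) = H (s (S q)) j - H (s q) j.
Proof. intros. unfold KF. apply kf_diff_gen; auto; pose proof HS as [_ [_ [_ Hi]]]; specialize (Hi q H0); lra. Qed.

Lemma x_measure j : (j < n)%nat -> piece_measure xpart j = 1 / INR n.
Proof. intros Hj. unfold piece_measure. simpl.
 set (G := fun q => if Nat.eqb (sp q) j then KF (S q) - KF q else 0).
 rewrite (rsum_ext _ (fun K => G (idx K))).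
 - unfold MM. rewrite (reindex G); [| intros q Hq Ha; unfold G; rewrite (actb_false q) by auto; destruct Nat.eqb; ring | lia].
   apply (Rmult_eq_reg_l (INR n)); [|apply not_0_INR; lia].
   rewrite <- rsum_scal. rewrite (rsum_ext _ (fun q => H (s (S q)) j - H (s q) j)).
   rewrite (rsum_telescope (fun q => H (s q) j)). destruct HS as [_ [E0 [E1 _]]]. rewrite E0, E1.
   destruct (HL j Hj) as [_ [_ [-> ->]]]. field. apply not_0_INR; lia.
   intros; apply H_piece_diff; auto.
 - intros K HK. unfold G, xpart; cbn [pd_t pd_lab]. rewrite xt_S, xt_lt; auto. Qed.

Lemma x_pi u j : inI u -> (j < n)%nat -> pi_map n xpart j (kf u) = H u j.
Proof. intros Hu Hj. rewrite pi_map_eq. simpl.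
 set (v := kf u).
 set (G := fun q => if Nat.eqb (sp q) j then Rmin v (KF (S q)) - Rmin v (KF q) else 0).
 rewrite (rsum_ext _ (fun K => G (idx K))).
 2:{ intros K HK. unfold pterm, G. simpl. rewrite xt_S, xt_lt; auto. }
 unfold MM. rewrite (reindex G); auto.
 2:{ intros q Hq Ha. unfold G. rewrite (actb_false q) by auto. destruct Nat.eqb; ring. }
 assert (forall p, (p <= m)%nat -> INR n * rsum G p = H (Rmin u (s p)) j).
 { induction p; intros Hp.
   - simpl. destruct HS as [_ [-> _]]. rewrite Rmin_right by (unfold inI in Hu; lra).
     destruct (HL j Hj) as [_ [_ [-> _]]]. ring.
   - simpl rsum. rewrite Rmult_plus_distr_l, IHp by lia.
     pose proof HS as [_ [_ [_ Hi]]]. specialize (Hi p ltac:(lia)).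
     pose proof (nsub_I m s HS p ltac:(lia)). pose proof (nsub_I m s HS (S p) ltac:(lia)).
     destruct (Rle_dec (s (S p)) u).
     + rewrite !Rmin_right by lra.
       assert (KF (S p) <= v) by (apply kf_mono; auto).
       assert (KF p <= KF (S p)) by (apply KF_step; lia).
       unfold G. rewrite !Rmin_right by lra. rewrite H_piece_diff by (auto; lia). ring.
     + destruct (Rle_dec u (s p)).
       * rewrite !Rmin_left by lra.
         assert (v <= KF p) by (apply kf_mono; auto).
         assert (KF p <= KF (S p)) by (apply KF_step; lia).
         unfold G. rewrite !Rmin_left by lra. destruct Nat.eqb; ring.
       * rewrite (Rmin_left u (s (S p))) by lra. rewrite (Rmin_right u (s p)) by lra.
         assert (v <= KF (S p)) by (apply kf_mono; auto; lra).
         assert (KF p <= v) by (apply kf_mono; auto; lra).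
         unfold G. rewrite (Rmin_left v (KF (S p))) by lra. rewrite (Rmin_right v (KF p)) by lra.
         unfold KF, v. rewrite (kf_diff_gen p u (s p) j) by (try lia; lra). ring. }
 rewrite H0 by lia. destruct HS as [_ [_ [-> _]]]. rewrite Rmin_left; auto. unfold inI in Hu; lra. Qed.

Lemma x_noncross : noncross MM (fun K => sp (idx K)).
Proof. intros a b c d Hab Hbc Hcd Hd.
 destruct (idx_spec a ltac:(lia)) as [? [Aa _]]. destruct (idx_spec b ltac:(lia)) as [? [Ab _]].
 destruct (idx_spec c ltac:(lia)) as [? [Ac _]]. destruct (idx_spec d ltac:(lia)) as [? [Ad _]].
 apply HN; try (apply idx_smono; lia); auto; apply act_KF; auto; apply actb_true; auto. Qed.

Lemma x_inF : in_F n xpart.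
Proof. apply in_F_of.
 - apply xsub.
 - intros k Hk. apply HT. apply idx_spec; auto.
 - apply x_measure.
 - apply x_noncross. Qed.

End Key.

Theorem key n H m s sp : (0 < n)%nat -> liftok n H -> nsub m s -> structok n H m s sp -> actnc H m s sp ->
  exists x f, in_F n x /\ in_Mon f /\ forall t, inI t -> forall j, (j < n)%nat -> pi_map n x j (f t) = H t j.
Proof. intros. exists (xpart n H m s sp), (kf n H). split; [apply x_inF; auto|]. split; [apply kf_Mon; auto|].
 intros. apply x_pi; auto. Qed.

Lemma image_of_lifts n g H m s sp : (0 < n)%nat -> liftok n H -> nsub m s -> structok n H m s sp -> actnc H m s sp ->
  (forall t, inI t -> forall j, (j < n)%nat -> ceq (g t j) (H t j)) -> in_image n g.
Proof. intros Hn HL HS HT HN Hg. right.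
 destruct (key n H m s sp Hn HL HS HT HN) as [x [f [HF [HM Hpi]]]].
 exists x, f. split; auto. split; auto. intros t Ht j Hj. unfold zeta. rewrite Hpi; auto. Qed.

Lemma image_lifts n g : (0 < n)%nat -> in_image n g -> exists x f, in_F n x /\ in_Mon f /\
  liftok n (fun t j => pi_map n x j (f t)) /\
  (exists s, subdivision (pd_m x) s /\ structok n (fun t j => pi_map n x j (f t)) (pd_m x) s (pd_lab x) /\
            noncross (pd_m x) (pd_lab x)) /\
  (forall t, inI t -> forall j, (j < n)%nat -> ceq (g t j) (pi_map n x j (f t))).
Proof. intros Hn [->|[x [f [HF [HM Heq]]]]]; [lia|]. exists x, f. split; auto. split; auto.
 destruct (forward n x f Hn HF HM) as [HL Hs]. split; auto. Qed.

Lemma noncross_actnc H m s sp : noncross m sp -> actnc H m s sp.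
Proof. intros HN a b c d ? ? ? ? _ _ _ _. apply HN; auto. Qed.

Lemma part1_fwd n g : (0 < n)%nat -> in_image n g -> is_based_map n g /\ cond1 n g /\ cond23 n g.
Proof. intros Hn Hi. destruct (image_lifts n g Hn Hi) as [x [f [HF [HM [HL [[s [HS [HT HN]]] Hg]]]]]].
 cbv beta in *.
 split; [|split].
 - intros i Hi'. destruct (HL i Hi') as [Hc [_ [H0 H1]]]. split; [|split].
   + intros t Ht e He. destruct (Hc t Ht e He) as [d [Hd P]]. exists d; split; auto.
     intros u Hu Hut. specialize (P u Hu Hut).
     destruct (Hg u Hu i Hi') as [k1 E1]. destruct (Hg t Ht i Hi') as [k2 E2].
     exists (k1 - k2)%Z. rewrite minus_IZR. replace (g u i - g t i - (IZR k1 - IZR k2)) with (pi_map n x i (f u) - pi_map n x i (f t)) by lra. exact P.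
   + eapply ceq_trans; [apply Hg; [unfold inI; lra|auto]|]. rewrite H0. apply ceq_refl.
   + eapply ceq_trans; [apply Hg; [unfold inI; lra|auto]|]. rewrite H1. apply ceq_10.
 - intros i Hi'. exists (fun t => pi_map n x i (f t)). destruct (HL i Hi') as [Hc [Hm [H0 H1]]].
   repeat split; auto. intros t Ht. apply ceq_sym, Hg; auto.
 - exists (pd_m x), s, (pd_lab x). split; auto. destruct HT as [Hsp Hc]. split; auto. split; auto.
   intros k i Hk Hi' Hne u Hu.
   pose proof (sub_nsub _ _ HS) as HS'. pose proof (nsub_I _ _ HS' k ltac:(lia)). pose proof (nsub_I _ _ HS' (S k) ltac:(lia)).
   assert (inI u) by (unfold inI in *; lra).
   eapply ceq_trans; [apply Hg; auto|]. rewrite (Hc k i Hk Hi' Hne u Hu). apply ceq_sym, Hg; auto. Qed.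

Lemma part1_bwd n g : (0 < n)%nat -> is_based_map n g -> cond1 n g -> cond23 n g -> in_image n g.
Proof. intros Hn _ H1 [m [s [sp [HS [Hsp [Hc HN]]]]]].
 set (P := fun j (h : R -> R) => rcont h /\ nondecr h /\ h 0 = 0 /\ h 1 = 1 /\ forall t, inI t -> ceq (h t) (g t j)).
 set (H := fun t j => epsilon (inhabits (fun _ : R => 0)) (P j) t).
 assert (HP : forall j, (j < n)%nat -> P j (fun t => H t j)).
 { intros j Hj. apply (epsilon_spec (inhabits (fun _ : R => 0)) (P j)). apply H1; auto. }
 apply (image_of_lifts n g H m s sp); auto.
 - intros j Hj. destruct (HP j Hj) as [? [? [? [? ?]]]]. repeat split; auto.
 - apply sub_nsub; auto.
 - split; auto. intros q j Hq Hj Hne u Hu. pose proof (sub_nsub _ _ HS) as HS'.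
   pose proof (nsub_I _ _ HS' q ltac:(lia)). pose proof (nsub_I _ _ HS' (S q) ltac:(lia)).
   destruct (HP j Hj) as [Hcont [_ [_ [_ Hg]]]].
   apply (lift_const (fun t => H t j) (s q) (s (S q))); auto.
   intros w Hw. assert (inI w) by (unfold inI in *; lra).
   eapply ceq_trans; [apply Hg; auto|]. eapply ceq_trans; [apply (Hc q j Hq Hj Hne w Hw)|].
   apply ceq_sym, Hg; auto.
 - apply noncross_actnc; auto.
 - intros t Ht j Hj. apply ceq_sym. apply (HP j Hj); auto. Qed.

Lemma part1 n g : (0 < n)%nat -> (in_image n g <-> is_based_map n g /\ cond1 n g /\ cond23 n g).
Proof. intros Hn; split. apply part1_fwd; auto. intros [? [? ?]]; apply part1_bwd; auto. Qed.

Lemma rcont_id : rcont (fun t => t).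
Proof. intros t Ht e He. exists e; split; auto. Qed.

Lemma id_image : in_image 1 id_op.
Proof. apply (image_of_lifts 1 id_op (fun t _ => t) 1 (fun k => INR k) (fun _ => 0%nat)); auto.
 - intros j Hj. repeat split; auto. apply rcont_id. intros u w _ _ H; auto.
 - split; auto. split; [reflexivity|]. split; [simpl; auto|]. intros k Hk. rewrite S_INR; lra.
 - split; auto. intros q j Hq Hj Hne. lia.
 - intros a b c d ? ? ? ? . lia.
 - intros t Ht j Hj. apply ceq_refl. Qed.

Lemma perm_image n sigma g : is_perm n sigma -> in_image n g -> in_image n (perm_act g sigma).
Proof. intros [Hb Hi] Hg. destruct (Nat.eq_dec n 0) as [->|Hn]; [left; auto|].
 assert (Hn' : (0 < n)%nat) by lia.
 destruct (image_lifts n g Hn' Hg) as [x [f [HF [HM [HL [[s [HS [[Hsp HT] HN]]] Hgl]]]]]].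
 assert (Hsurj : FinFun.bSurjective n sigma).
 { apply FinFun.bInjective_bSurjective; auto. }
 set (inv := fun y => epsilon (inhabits 0%nat) (fun p => (p < n)%nat /\ sigma p = y)).
 assert (Hinv : forall y, (y < n)%nat -> (inv y < n)%nat /\ sigma (inv y) = y).
 { intros y Hy. apply (epsilon_spec (inhabits 0%nat) (fun p => (p < n)%nat /\ sigma p = y)). apply Hsurj; auto. }
 apply (image_of_lifts n (perm_act g sigma) (fun t p => pi_map n x (sigma p) (f t)) (pd_m x) s
          (fun k => inv (pd_lab x k))); auto.
 - intros j Hj. apply HL; auto.
 - apply sub_nsub; auto.
 - split. intros k Hk. apply Hinv; auto.
   intros q j Hq Hj Hne u Hu. apply HT; auto. intro E. apply Hne.
   destruct (Hinv (pd_lab x q) (Hsp q Hq)) as [H1 H2]. apply Hi; auto. congruence.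
 - intros a b c d ? ? ? ? _ _ _ _ [E1 [E2 E3]]. apply (HN a b c d); auto.
   destruct (Hinv (pd_lab x a) (Hsp a ltac:(lia))) as [_ Ha].
   destruct (Hinv (pd_lab x b) (Hsp b ltac:(lia))) as [_ Hb'].
   destruct (Hinv (pd_lab x c) (Hsp c ltac:(lia))) as [_ Hc].
   destruct (Hinv (pd_lab x d) (Hsp d ltac:(lia))) as [_ Hd].
   split; [congruence|]. split; [congruence|]. intro E. apply E3. congruence.
 - intros t Ht j Hj. unfold perm_act. apply Hgl; auto. Qed.

Lemma comp0_image k i f g : (i < k)%nat -> in_image k f -> in_image (k + 0 - 1) (comp_op k 0 i f g).
Proof. intros Hik Hf. destruct (Nat.eq_dec k 1) as [->|Hk1]; [left; lia|].
 assert (Hn : (0 < k + 0 - 1)%nat) by lia.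
 assert (Hk : (0 < k)%nat) by lia.
 destruct (image_lifts k f Hk Hf) as [x [phi [HF [HM [HL [[s [HS [[Hsp HT] HN]]] Hgl]]]]]].
 set (H := fun t j => pi_map k x j (phi t)) in *.
 set (J := fun p => if Nat.ltb p i then p else S p).
 set (sp := fun q => if Nat.ltb (pd_lab x q) i then pd_lab x q else if Nat.eqb (pd_lab x q) i then 0%nat else (pd_lab x q - 1)%nat).
 assert (HJ : forall p, (p < k + 0 - 1)%nat -> (J p < k)%nat /\ J p <> i).
 { intros p Hp. unfold J. destruct (Nat.ltb_spec p i); lia. }
 assert (HJsp : forall q p, (q < pd_m x)%nat -> (p < k + 0 - 1)%nat -> pd_lab x q = J p -> sp q = p).
 { intros q p Hq Hp E. unfold sp, J in *. rewrite E. destruct (Nat.ltb_spec p i).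
   - destruct (Nat.ltb_spec p i); lia.
   - destruct (Nat.ltb_spec (S p) i); try lia. destruct (Nat.eqb_spec (S p) i); lia. }
 apply (image_of_lifts (k + 0 - 1) (comp_op k 0 i f g) (fun t p => H t (J p)) (pd_m x) s sp); auto.
 - intros p Hp. apply HL. apply HJ; auto.
 - apply sub_nsub; auto.
 - split.
   + intros q Hq. specialize (Hsp q Hq). unfold sp. destruct (Nat.ltb_spec (pd_lab x q) i); try lia.
     destruct (Nat.eqb_spec (pd_lab x q) i); lia.
   + intros q p Hq Hp Hne u Hu. apply HT; auto. apply HJ; auto. intro E. apply Hne. symmetry. apply HJsp; auto.
 - intros a b c d ? ? ? ? Aa Ab Ac Ad [E1 [E2 E3]].
   assert (Hact : forall q, (q < pd_m x)%nat -> H (s q) (J (sp q)) < H (s (S q)) (J (sp q)) ->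
             (sp q < k + 0 - 1)%nat /\ pd_lab x q = J (sp q)).
   { intros q Hq Hlt. specialize (Hsp q Hq).
     destruct (Nat.eq_dec (pd_lab x q) i) as [Ei|Ni].
     - exfalso. assert (Es : sp q = 0%nat) by (unfold sp; rewrite Ei, Nat.ltb_irrefl, Nat.eqb_refl; auto).
       rewrite Es in Hlt.
       assert (Hj0 : (J 0%nat < k)%nat /\ J 0%nat <> pd_lab x q) by (unfold J; destruct (Nat.ltb_spec 0 i); lia).
       pose proof (sub_nsub _ _ HS) as [_ [_ [_ Hi]]]. specialize (Hi q Hq).
       unfold H in Hlt. rewrite (HT q _ Hq (proj1 Hj0) (proj2 Hj0) (s (S q))) in Hlt by lra. lra.
     - unfold sp, J. destruct (Nat.ltb_spec (pd_lab x q) i).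
       + split; [lia|]. destruct (Nat.ltb_spec (pd_lab x q) i); lia.
       + destruct (Nat.eqb_spec (pd_lab x q) i); [lia|].
         split; [lia|]. destruct (Nat.ltb_spec (pd_lab x q - 1) i); lia. }
   destruct (Hact a ltac:(lia) Aa) as [_ La]. destruct (Hact b ltac:(lia) Ab) as [_ Lb].
   destruct (Hact c ltac:(lia) Ac) as [_ Lc]. destruct (Hact d ltac:(lia) Ad) as [_ Ld].
   apply (HN a b c d); auto. split; [congruence|]. split; [congruence|].
   intro E. apply E3. rewrite La, Lb in E. unfold J in E.
   destruct (Nat.ltb_spec (sp a) i), (Nat.ltb_spec (sp b) i); lia.
 - intros t Ht p Hp. unfold comp_op. unfold J.
   destruct (Nat.ltb_spec p i). apply Hgl; auto; lia.
   destruct (Nat.ltb_spec p (i + 0)); [lia|]. replace (p - 0 + 1)%nat with (S p) by lia. apply Hgl; auto; lia. Qed.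

Lemma clamp2 a b y y' : a <= b -> y <= y' -> Rmax a (Rmin b y) < Rmax a (Rmin b y') ->
  y <= Rmax a (Rmin b y) /\ Rmax a (Rmin b y') <= y'.
Proof. intros. unfold Rmax, Rmin in *. repeat destruct Rle_dec; lra. Qed.

Lemma grid_S m2 N : (0 < m2)%nat ->
  ((S (N mod m2) < m2)%nat -> (S N / m2 = N / m2)%nat /\ (S N mod m2 = S (N mod m2))%nat) /\
  ((S (N mod m2) = m2)%nat -> (S N / m2 = S (N / m2))%nat /\ (S N mod m2 = 0)%nat).
Proof. intros Hm. pose proof (Nat.div_mod N m2 ltac:(lia)). split; intros Hr.
 - split; [symmetry; apply (Nat.div_unique _ _ _ (S (N mod m2))); auto; lia|
           symmetry; apply (Nat.mod_unique _ _ (N / m2)); auto; lia].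
 - split; [symmetry; apply (Nat.div_unique _ _ _ 0); auto; lia|
           symmetry; apply (Nat.mod_unique _ _ (S (N / m2))); auto; lia]. Qed.

Section Comp.
Variables k l i : nat.
Hypothesis Hik : (i < k)%nat.
Hypothesis Hl : (0 < l)%nat.
Variables (H : R -> nat -> R) (m1 : nat) (s1 : nat -> R) (lab1 : nat -> nat).
Hypothesis HL1 : liftok k H.
Hypothesis HS1 : subdivision m1 s1.
Hypothesis HT1 : structok k H m1 s1 lab1.
Hypothesis HN1 : noncross m1 lab1.
Variables (K : R -> nat -> R) (m2 : nat) (s2 : nat -> R) (lab2 : nat -> nat).
Hypothesis HL2 : liftok l K.
Hypothesis HS2 : subdivision m2 s2.
Hypothesis HT2 : structok l K m2 s2 lab2.
Hypothesis HN2 : noncross m2 lab2.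

Definition Cl (t : R) (p : nat) : R :=
  if Nat.ltb p i then H t p else if Nat.ltb p (i + l) then K (H t i) (p - i) else H t (p - l + 1).

Definition aa q := H (s1 q) i.
Definition bb q := H (s1 (S q)) i.
Definition cl q r := Rmax (aa q) (Rmin (bb q) (s2 r)).
Definition pick q c := if Rle_dec c (aa q) then s1 q else if Rle_dec (bb q) c then s1 (S q) else
  epsilon (inhabits 0) (fun u => s1 q <= u <= s1 (S q) /\ H u i = c).
Definition Pg q r := if Nat.eqb r 0 then s1 q else if Nat.eqb r m2 then s1 (S q) else pick q (cl q r).
Definition sg N := Pg (N / m2)%nat (N mod m2).
Definition spg N := let q := (N / m2)%nat in let r := N mod m2 in
  if Nat.ltb (lab1 q) i then lab1 q else if Nat.eqb (lab1 q) i then (i + lab2 r)%nat else (lab1 q + l - 1)%nat.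

Lemma HS1' : nsub m1 s1. Proof. apply sub_nsub; auto. Qed.
Lemma HS2' : nsub m2 s2. Proof. apply sub_nsub; auto. Qed.
Lemma m2_pos : (0 < m2)%nat. Proof. apply HS2. Qed.

Lemma Hi_mono u w : inI u -> inI w -> u <= w -> H u i <= H w i.
Proof. intros. apply (HL1 i Hik); auto. Qed.

Lemma ab_props q : (q < m1)%nat -> 0 <= aa q <= bb q /\ bb q <= 1.
Proof. intros Hq. unfold aa, bb. pose proof (nsub_I _ _ HS1' q ltac:(lia)). pose proof (nsub_I _ _ HS1' (S q) ltac:(lia)).
 pose proof (liftok_I _ _ i (s1 q) HL1 Hik H0). pose proof (liftok_I _ _ i (s1 (S q)) HL1 Hik H1).
 pose proof (HS1') as [_ [_ [_ Hinc]]]. specialize (Hinc q Hq).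
 pose proof (Hi_mono _ _ H0 H1 Hinc). unfold inI in *. lra. Qed.

Lemma cl_range q r : (q < m1)%nat -> aa q <= cl q r <= bb q.
Proof. intros Hq. pose proof (ab_props q Hq). unfold cl, Rmax, Rmin. repeat destruct Rle_dec; lra. Qed.

Lemma pick_spec q c : (q < m1)%nat -> aa q <= c <= bb q -> s1 q <= pick q c <= s1 (S q) /\ H (pick q c) i = c.
Proof. intros Hq Hc. pose proof (HS1') as [_ [_ [_ Hinc]]]. specialize (Hinc q Hq).
 unfold pick. destruct (Rle_dec c (aa q)).
 - split; [lra|]. unfold aa in *; lra.
 - destruct (Rle_dec (bb q) c). split; [lra|]. unfold bb in *; lra.
   apply (epsilon_spec (inhabits 0) (fun u => s1 q <= u <= s1 (S q) /\ H u i = c)).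
   assert (Hr : rcont (fun u => H u i)) by apply (HL1 i Hik).
   pose proof (nsub_I _ _ HS1' q ltac:(lia)). pose proof (nsub_I _ _ HS1' (S q) ltac:(lia)).
   destruct (rcont_IVT (fun u => H u i) (s1 q) (s1 (S q)) c Hr H0 H1 ltac:(lra)) as [u [Hu1 Hu2]].
   unfold aa, bb in *; lra. exists u; auto. Qed.

Lemma Pg_spec q r : (q < m1)%nat -> (r <= m2)%nat -> s1 q <= Pg q r <= s1 (S q) /\ H (Pg q r) i = cl q r.
Proof. intros Hq Hr. pose proof (HS1') as [_ [_ [_ Hinc]]]. specialize (Hinc q Hq).
 pose proof (ab_props q Hq). pose proof HS2 as [_ [E0 [E1 _]]].
 unfold Pg. destruct (Nat.eqb_spec r 0) as [->|Hr0].
 - split; [lra|]. unfold cl. rewrite E0. fold (aa q). unfold Rmax, Rmin. repeat destruct Rle_dec; lra.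
 - destruct (Nat.eqb_spec r m2) as [->|Hrm].
   + split; [lra|]. unfold cl. rewrite E1. fold (bb q). unfold Rmax, Rmin. repeat destruct Rle_dec; lra.
   + apply pick_spec; auto. apply cl_range; auto. Qed.

Lemma pick_mono q c c' : (q < m1)%nat -> aa q <= c <= bb q -> aa q <= c' <= bb q -> c <= c' -> pick q c <= pick q c'.
Proof. intros Hq Hc Hc' Hcc. destruct (Req_dec c c') as [->|Hne]; [lra|].
 destruct (Rle_dec (pick q c) (pick q c')) as [|Hn]; auto. exfalso.
 destruct (pick_spec q c Hq Hc) as [P1 E1]. destruct (pick_spec q c' Hq Hc') as [P2 E2].
 pose proof (nsub_I _ _ HS1' q ltac:(lia)). pose proof (nsub_I _ _ HS1' (S q) ltac:(lia)).
 assert (I1 : inI (pick q c)) by (unfold inI in *; lra). assert (I2 : inI (pick q c')) by (unfold inI in *; lra).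
 pose proof (Hi_mono _ _ I2 I1 ltac:(lra)). lra. Qed.

Lemma Pg_step q r : (q < m1)%nat -> (r < m2)%nat -> Pg q r <= Pg q (S r).
Proof. intros Hq Hr. pose proof (Pg_spec q r Hq ltac:(lia)) as [A1 _]. pose proof (Pg_spec q (S r) Hq ltac:(lia)) as [A2 _].
 destruct (Nat.eqb_spec r 0) as [->|H0]. unfold Pg at 1; simpl; lra.
 destruct (Nat.eqb_spec (S r) m2) as [E|H1]. unfold Pg at 2. rewrite E, Nat.eqb_refl. destruct m2; [lia|]. simpl Nat.eqb. lra.
 unfold Pg. replace (Nat.eqb r 0) with false by (symmetry; apply Nat.eqb_neq; auto).
 replace (Nat.eqb r m2) with false by (symmetry; apply Nat.eqb_neq; lia).
 replace (Nat.eqb (S r) m2) with false by (symmetry; apply Nat.eqb_neq; auto). simpl Nat.eqb.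
 apply pick_mono; auto; try apply cl_range; auto.
 unfold cl. pose proof (sub_mono m2 s2 HS2 r (S r) ltac:(lia) ltac:(lia)). unfold Rmax, Rmin. repeat destruct Rle_dec; lra. Qed.

Lemma grid N : (N < m1 * m2)%nat ->
  (N / m2 < m1)%nat /\ (N mod m2 < m2)%nat /\ sg N = Pg (N / m2)%nat (N mod m2) /\ sg (S N) = Pg (N / m2)%nat (S (N mod m2)).
Proof. intros HN. pose proof m2_pos. split; [apply Nat.Div0.div_lt_upper_bound; lia|].
 split; [apply Nat.mod_upper_bound; lia|]. split; [reflexivity|].
 destruct (grid_S m2 N H0) as [G1 G2]. pose proof (Nat.mod_upper_bound N m2 ltac:(lia)).
 unfold sg. destruct (Nat.eq_dec (S (N mod m2)) m2) as [E|Ne].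
 - destruct (G2 E) as [-> ->]. unfold Pg. rewrite E. simpl Nat.eqb. rewrite Nat.eqb_refl.
   destruct m2; [lia|]. simpl. auto.
 - destruct (G1 ltac:(lia)) as [-> ->]. auto. Qed.


Lemma Cl_lo t p : (p < i)%nat -> Cl t p = H t p.
Proof. intros. unfold Cl. destruct (Nat.ltb_spec p i); auto; lia. Qed.
Lemma Cl_mid t p : (i <= p)%nat -> (p < i + l)%nat -> Cl t p = K (H t i) (p - i).
Proof. intros. unfold Cl. destruct (Nat.ltb_spec p i); try lia. destruct (Nat.ltb_spec p (i + l)); auto; lia. Qed.
Lemma Cl_hi t p : (i + l <= p)%nat -> Cl t p = H t (p - l + 1).
Proof. intros. unfold Cl. destruct (Nat.ltb_spec p i); try lia. destruct (Nat.ltb_spec p (i + l)); auto; lia. Qed.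

Lemma Cl_liftok : liftok (k + l - 1) Cl.
Proof. intros p Hp. destruct (lt_dec p i).
 - destruct (HL1 p ltac:(lia)) as [A [B [C D]]]. repeat split.
   + intros t Ht e He. destruct (A t Ht e He) as [d [Hd P]]. exists d; split; auto. intros. rewrite !Cl_lo by auto; auto.
   + intros u w Hu Hw Huw. rewrite !Cl_lo by auto. apply B; auto.
   + rewrite Cl_lo by auto; auto.
   + rewrite Cl_lo by auto; auto.
 - destruct (lt_dec p (i + l)).
   + destruct (HL2 (p - i)%nat ltac:(lia)) as [A [B [C D]]]. destruct (HL1 i Hik) as [A1 [B1 [C1 D1]]].
     repeat split.
     * intros t Ht e He. destruct (rcont_comp (fun v => K v (p - i)%nat) (fun t => H t i) A A1 (fun t Ht => liftok_I k H i t HL1 Hik Ht) t Ht e He) as [d [Hd P]].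
       exists d; split; auto. intros. rewrite !Cl_mid by lia. auto.
     * intros u w Hu Hw Huw. rewrite !Cl_mid by lia. apply B; try (apply (liftok_I k H); auto). apply B1; auto.
     * rewrite Cl_mid by lia. simpl in C1. rewrite C1. auto.
     * rewrite Cl_mid by lia. simpl in D1. rewrite D1. auto.
   + destruct (HL1 (p - l + 1)%nat ltac:(lia)) as [A [B [C D]]]. repeat split.
     * intros t Ht e He. destruct (A t Ht e He) as [d [Hd P]]. exists d; split; auto. intros. rewrite !Cl_hi by lia; auto.
     * intros u w Hu Hw Huw. rewrite !Cl_hi by lia. apply B; auto.
     * rewrite Cl_hi by lia; auto.
     * rewrite Cl_hi by lia; auto. Qed.

Lemma sg_nsub : nsub (m1 * m2) sg.
Proof. pose proof m2_pos. pose proof HS1 as [Hm1 [E0 [E1 _]]]. split; [|split; [|split]].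
 - apply Nat.mul_pos_pos; lia.
 - unfold sg. rewrite Nat.Div0.div_0_l, Nat.Div0.mod_0_l. unfold Pg. simpl. auto.
 - unfold sg. rewrite Nat.div_mul, Nat.Div0.mod_mul by lia. unfold Pg. simpl. auto.
 - intros N HN. destruct (grid N HN) as [Hq [Hr [-> ->]]]. apply Pg_step; auto. Qed.

Definition qo N := Nat.div N m2.
Definition ro N := Nat.modulo N m2.
Lemma grid_piece N u : (N < m1 * m2)%nat -> sg N <= u <= sg (S N) ->
  s1 (qo N) <= sg N /\ sg (S N) <= s1 (S (qo N)) /\
  H (sg N) i = cl (qo N) (ro N) /\ H (sg (S N)) i = cl (qo N) (S (ro N)).
Proof. intros HN Hu. destruct (grid N HN) as [Hq [Hr [E1 E2]]]. unfold qo, ro. rewrite E1, E2.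
 destruct (Pg_spec (N / m2)%nat (N mod m2) Hq ltac:(lia)). destruct (Pg_spec (N / m2)%nat (S (N mod m2)) Hq ltac:(lia)).
 repeat split; try lra; auto. Qed.

Lemma spg_lt N : (N < m1 * m2)%nat -> (spg N < k + l - 1)%nat.
Proof. intros HN. destruct (grid N HN) as [Hq [Hr _]]. unfold spg.
 pose proof (proj1 HT1 _ Hq). pose proof (proj1 HT2 _ Hr).
 destruct (Nat.ltb_spec (lab1 (N / m2)) i); try lia. destruct (Nat.eqb_spec (lab1 (N / m2)) i); lia. Qed.

Lemma Hconst q j u : (q < m1)%nat -> (j < k)%nat -> j <> lab1 q -> s1 q <= u <= s1 (S q) -> H u j = H (s1 q) j.
Proof. intros. apply HT1; auto. Qed.

Lemma sg_structok : structok (k + l - 1) Cl (m1 * m2) sg spg.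
Proof. split; [apply spg_lt|]. intros N p HN Hp Hne u Hu.
 destruct (grid N HN) as [Hq [Hr [E1 E2]]].
 destruct (grid_piece N u HN Hu) as [B1 [B2 [C1 C2]]]. unfold qo, ro in *.
 set (q := (N / m2)%nat) in *. set (r := (N mod m2)) in *.
 assert (Hu1 : s1 q <= u <= s1 (S q)) by lra.
 assert (Hs1 : s1 q <= sg N <= s1 (S q)) by (pose proof (Pg_step q r Hq Hr); rewrite <- E1, <- E2 in *; lra).
 assert (Hspq : spg N = (if Nat.ltb (lab1 q) i then lab1 q else if Nat.eqb (lab1 q) i then (i + lab2 r)%nat else (lab1 q + l - 1)%nat)) by reflexivity.
 destruct (lt_dec p i).
 - rewrite !Cl_lo by auto. assert (p <> lab1 q).
   { intro E. apply Hne. rewrite Hspq, <- E. destruct (Nat.ltb_spec p i); lia. }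
   rewrite (Hconst q p u), (Hconst q p (sg N)); auto; try lia; lra.
 - destruct (lt_dec p (i + l)).
   + rewrite !Cl_mid by lia. destruct (Nat.eq_dec (lab1 q) i) as [Ei|Ni].
     * assert (Hne2 : (p - i)%nat <> lab2 r).
       { intro E. apply Hne. rewrite Hspq, Ei, Nat.ltb_irrefl, Nat.eqb_refl. lia. }
       assert (HuI : inI u).
       { pose proof (nsub_I _ _ HS1' q ltac:(lia)). pose proof (nsub_I _ _ HS1' (S q) ltac:(lia)). unfold inI in *; lra. }
       assert (HsI : inI (sg N)).
       { pose proof (nsub_I _ _ HS1' q ltac:(lia)). pose proof (nsub_I _ _ HS1' (S q) ltac:(lia)). unfold inI in *; lra. }
       assert (HsI2 : inI (sg (S N))).
       { pose proof (nsub_I _ _ HS1' q ltac:(lia)). pose proof (nsub_I _ _ HS1' (S q) ltac:(lia)). unfold inI in *; lra. }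
       pose proof (Hi_mono _ _ HsI HuI ltac:(lra)). pose proof (Hi_mono _ _ HuI HsI2 ltac:(lra)).
       destruct (Req_dec (cl q r) (cl q (S r))) as [Eq|Nq].
       { assert (H u i = H (sg N) i) by lra. rewrite H2. auto. }
       assert (Hlt : cl q r < cl q (S r)).
       { pose proof (Pg_step q r Hq Hr). rewrite <- E1, <- E2 in *. lra. }
       pose proof (ab_props q Hq).
       destruct (clamp2 (aa q) (bb q) (s2 r) (s2 (S r)) ltac:(lra) ltac:(apply (sub_mono m2 s2 HS2); lia) Hlt) as [D1 D2].
       assert (D1' : s2 r <= cl q r) by exact D1. assert (D2' : cl q (S r) <= s2 (S r)) by exact D2.
       destruct HT2 as [_ HK]. rewrite C1.
       rewrite (HK r (p - i)%nat Hr ltac:(lia) Hne2 (H u i)) by lra.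
       rewrite (HK r (p - i)%nat Hr ltac:(lia) Hne2 (cl q r)) by lra. auto.
     * rewrite (Hconst q i u), (Hconst q i (sg N)); auto; try lia; lra.
   + rewrite !Cl_hi by lia. assert ((p - l + 1)%nat <> lab1 q).
     { intro E. apply Hne. rewrite Hspq, <- E. destruct (Nat.ltb_spec (p - l + 1) i); try lia.
       destruct (Nat.eqb_spec (p - l + 1) i); lia. }
     rewrite (Hconst q (p - l + 1) u), (Hconst q (p - l + 1) (sg N)); auto; try lia; lra. Qed.


Definition bk (sg0 : nat) : nat := if Nat.ltb sg0 i then sg0 else if Nat.ltb sg0 (i + l) then i else (sg0 - l + 1)%nat.

Lemma bk_spg N : (N < m1 * m2)%nat -> bk (spg N) = lab1 (qo N).
Proof. intros HN. destruct (grid N HN) as [Hq [Hr _]]. pose proof (proj2 HT1). pose proof (proj1 HT2 _ Hr).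
 pose proof (proj1 HT1 _ Hq). unfold bk, spg, qo. fold (qo N) in *. set (q := qo N) in *.
 destruct (Nat.ltb_spec (lab1 q) i).
 - destruct (Nat.ltb_spec (lab1 q) i); lia.
 - destruct (Nat.eqb_spec (lab1 q) i).
   + destruct (Nat.ltb_spec (i + lab2 (N mod m2)) i); try lia. destruct (Nat.ltb_spec (i + lab2 (N mod m2)) (i + l)); lia.
   + destruct (Nat.ltb_spec (lab1 q + l - 1) i); try lia. destruct (Nat.ltb_spec (lab1 q + l - 1) (i + l)); lia. Qed.

Lemma spg_outer N : lab1 (qo N) <> i -> spg N = (if Nat.ltb (lab1 (qo N)) i then lab1 (qo N) else (lab1 (qo N) + l - 1)%nat).
Proof. intros. unfold spg. fold (qo N). destruct (Nat.ltb (lab1 (qo N)) i); auto.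
 destruct (Nat.eqb_spec (lab1 (qo N)) i); auto; lia. Qed.

Lemma spg_mid N : lab1 (qo N) = i -> spg N = (i + lab2 (ro N))%nat.
Proof. intros E. unfold spg. fold (qo N). rewrite E, Nat.ltb_irrefl, Nat.eqb_refl. auto. Qed.

Lemma cl_I q r : (q < m1)%nat -> inI (cl q r).
Proof. intros. pose proof (cl_range q r H0). pose proof (ab_props q H0). unfold inI; lra. Qed.

Lemma mid_active N : (N < m1 * m2)%nat -> lab1 (qo N) = i ->
  Cl (sg N) (spg N) < Cl (sg (S N)) (spg N) ->
  s2 (ro N) <= cl (qo N) (ro N) /\ cl (qo N) (ro N) < cl (qo N) (S (ro N)) /\ cl (qo N) (S (ro N)) <= s2 (S (ro N)).
Proof. intros HN Ei Ha. destruct (grid N HN) as [Hq [Hr _]]. fold (qo N) (ro N) in Hq, Hr.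
 destruct (grid_piece N (sg N) HN) as [_ [_ [C1 C2]]]. pose proof (Pg_step (qo N) (ro N) Hq Hr).
 { destruct (grid N HN) as [_ [_ [E1 E2]]]. fold (qo N) (ro N) in E1, E2. rewrite <- E1, <- E2 in H0. lra. }
 rewrite spg_mid in Ha by auto. rewrite !Cl_mid in Ha by (pose proof (proj1 HT2 _ Hr); lia).
 replace (i + lab2 (ro N) - i)%nat with (lab2 (ro N)) in Ha by lia.
 rewrite C1, C2 in Ha.
 assert (Hlt : cl (qo N) (ro N) < cl (qo N) (S (ro N))).
 { destruct (Rlt_le_dec (cl (qo N) (ro N)) (cl (qo N) (S (ro N)))) as [|Hle]; auto.
   destruct (HL2 (lab2 (ro N)) (proj1 HT2 _ Hr)) as [_ [Hm _]].
   pose proof (Hm _ _ (cl_I _ (S (ro N)) Hq) (cl_I _ (ro N) Hq) Hle). simpl in H0. lra. }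
 pose proof (ab_props _ Hq).
 destruct (clamp2 (aa (qo N)) (bb (qo N)) (s2 (ro N)) (s2 (S (ro N))) ltac:(lra) ltac:(apply (sub_mono m2 s2 HS2); lia) Hlt) as [D1 D2].
 split; [exact D1|]. split; auto. Qed.

Lemma qo_mono N N' : (N <= N')%nat -> (qo N <= qo N')%nat.
Proof. intros. unfold qo. apply Nat.Div0.div_le_mono; auto. Qed.

Lemma rmono N N' : (N < N')%nat -> (N' < m1 * m2)%nat -> lab1 (qo N) = i -> lab1 (qo N') = i ->
  Cl (sg N) (spg N) < Cl (sg (S N)) (spg N) -> Cl (sg N') (spg N') < Cl (sg (S N')) (spg N') ->
  lab2 (ro N) <> lab2 (ro N') -> (ro N < ro N')%nat.
Proof. intros HNN HN' E E' A A' Hne.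
 destruct (mid_active N ltac:(lia) E A) as [D1 [D2 D3]].
 destruct (mid_active N' HN' E' A') as [D1' [D2' D3']].
 destruct (grid N ltac:(lia)) as [Hq [Hr _]]. destruct (grid N' HN') as [Hq' [Hr' _]].
 fold (qo N) (ro N) (qo N') (ro N') in *.
 pose proof m2_pos.
 pose proof (Nat.div_mod N m2 ltac:(lia)). pose proof (Nat.div_mod N' m2 ltac:(lia)). fold (qo N) (ro N) (qo N') (ro N') in *.
 pose proof (qo_mono N N' ltac:(lia)).
 destruct (Nat.eq_dec (qo N) (qo N')) as [Eq|Nq].
 - rewrite Eq in H1. lia.
 - assert (Hlt : s2 (ro N) < s2 (S (ro N'))).
   { pose proof (cl_range (qo N) (S (ro N)) Hq). pose proof (cl_range (qo N') (ro N') Hq').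
     assert (bb (qo N) <= aa (qo N')).
     { unfold aa, bb. apply Hi_mono. apply (nsub_I _ _ HS1'); lia. apply (nsub_I _ _ HS1'); lia.
       apply (sub_mono m1 s1 HS1); lia. }
     lra. }
   pose proof (sub_idx m2 s2 HS2 (ro N) (S (ro N')) ltac:(lia) ltac:(lia) Hlt).
   destruct (Nat.eq_dec (ro N) (ro N')); [congruence|lia]. Qed.

Lemma sg_actnc : actnc Cl (m1 * m2) sg spg.
Proof. intros a b c d Hab Hbc Hcd Hd Aa Ab Ac Ad [E1 [E2 E3]].
 pose proof (bk_spg a ltac:(lia)) as Ba. pose proof (bk_spg b ltac:(lia)) as Bb.
 pose proof (bk_spg c ltac:(lia)) as Bc. pose proof (bk_spg d ltac:(lia)) as Bd.
 assert (Pac : lab1 (qo a) = lab1 (qo c)) by congruence.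
 assert (Pbd : lab1 (qo b) = lab1 (qo d)) by congruence.
 destruct (Nat.eq_dec (lab1 (qo a)) (lab1 (qo b))) as [Eab|Nab].
 - destruct (Nat.eq_dec (lab1 (qo a)) i) as [Ei|Ni].
   + assert (Eb : lab1 (qo b) = i) by congruence. assert (Ec : lab1 (qo c) = i) by congruence.
     assert (Ed : lab1 (qo d) = i) by congruence.
     rewrite !spg_mid in E1, E2, E3 by auto.
     assert (F1 : lab2 (ro a) = lab2 (ro c)) by lia. assert (F2 : lab2 (ro b) = lab2 (ro d)) by lia.
     assert (F3 : lab2 (ro a) <> lab2 (ro b)) by lia.
     pose proof (rmono a b Hab ltac:(lia) Ei Eb Aa Ab F3).
     pose proof (rmono b c Hbc ltac:(lia) Eb Ec Ab Ac ltac:(congruence)).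
     pose proof (rmono c d Hcd ltac:(lia) Ec Ed Ac Ad ltac:(congruence)).
     destruct (grid d ltac:(lia)) as [_ [Hr _]]. fold (ro d) in Hr.
     apply (HN2 (ro a) (ro b) (ro c) (ro d)); auto.
   + apply E3. rewrite !spg_outer by congruence. rewrite Eab. auto.
 - pose proof (qo_mono a b ltac:(lia)). pose proof (qo_mono b c ltac:(lia)). pose proof (qo_mono c d ltac:(lia)).
   assert (qo a <> qo b) by (intro X; apply Nab; rewrite X; auto).
   assert (qo b <> qo c) by (intro X; apply Nab; rewrite Pac, <- X; auto).
   assert (qo c <> qo d) by (intro X; apply Nab; rewrite Pac, Pbd, X; auto).
   destruct (grid d ltac:(lia)) as [Hq _]. fold (qo d) in Hq.
   apply (HN1 (qo a) (qo b) (qo c) (qo d)); try lia. Qed.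

End Comp.

Lemma comp_image k l i f g : (i < k)%nat -> in_image k f -> in_image l g -> in_image (k + l - 1) (comp_op k l i f g).
Proof. intros Hik Hf Hg. destruct (Nat.eq_dec l 0) as [->|Hl0].
 { apply comp0_image; auto. }
 assert (Hl : (0 < l)%nat) by lia. assert (Hk : (0 < k)%nat) by lia.
 destruct (image_lifts k f Hk Hf) as [x1 [p1 [HF1 [HM1 [HL1 [[s1 [HS1 [HT1 HN1]]] Hg1]]]]]].
 destruct (image_lifts l g Hl Hg) as [x2 [p2 [HF2 [HM2 [HL2 [[s2 [HS2 [HT2 HN2]]] Hg2]]]]]].
 set (H := fun t j => pi_map k x1 j (p1 t)) in *.
 set (K := fun t j => pi_map l x2 j (p2 t)) in *.
 apply (image_of_lifts (k + l - 1) (comp_op k l i f g) (Cl l i H K) (pd_m x1 * pd_m x2)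
   (sg i H s1 (pd_m x2) s2) (spg l i (pd_lab x1) (pd_m x2) (pd_lab x2))).
 - lia.
 - apply (Cl_liftok k l i); auto.
 - apply (sg_nsub k l i Hik Hl H (pd_m x1) s1 HL1 HS1 K (pd_m x2) s2 (pd_lab x2)); auto.
 - apply (sg_structok k l i Hik Hl H (pd_m x1) s1 (pd_lab x1)); auto.
 - apply (sg_actnc k l i Hik Hl H (pd_m x1) s1 (pd_lab x1)); auto.
 - intros t Ht p Hp. unfold comp_op.
   destruct (lt_dec p i).
   + rewrite (Cl_lo k l i Hik Hl) by auto. destruct (Nat.ltb_spec p i); [|lia]. apply Hg1; auto; lia.
   + destruct (lt_dec p (i + l)).
     * rewrite (Cl_mid k l i Hik Hl) by lia. destruct (Nat.ltb_spec p i); [lia|]. destruct (Nat.ltb_spec p (i + l)); [|lia].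
       rewrite (frac_ceq _ _ (Hg1 t Ht i Hik)).
       pose proof (liftok_I k H i t HL1 Hik Ht) as HI.
       assert (Hpi : (p - i < l)%nat) by lia.
       destruct (Req_dec (H t i) 1) as [E|NE].
       -- change (pi_map k x1 i (p1 t)) with (H t i). rewrite E. rewrite (frac_ceq _ _ ceq_10), fp_R0.
          eapply ceq_trans; [apply Hg2; auto; unfold inI; lra|].
          destruct (HL2 (p - i)%nat Hpi) as [_ [_ [E0 E1]]]. unfold K in *. cbv beta in E0, E1 |- *. rewrite E0, E1.
          apply ceq_sym, ceq_10.
       -- change (pi_map k x1 i (p1 t)) with (H t i). rewrite frac_id by (unfold inI in HI; lra). apply Hg2; auto.
     * rewrite (Cl_hi k l i Hik Hl) by lia. destruct (Nat.ltb_spec p i); [lia|]. destruct (Nat.ltb_spec p (i + l)); [lia|].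
       apply Hg1; auto; lia. Qed.

Theorem proposition4p5 :
  (forall (n : nat) (g : cmap), (0 < n)%nat ->
     (in_image n g <-> is_based_map n g /\ cond1 n g /\ cond23 n g)) /\
  (in_image 1 id_op /\
   (forall (k l i : nat) (f g : cmap), (i < k)%nat ->
      in_image k f -> in_image l g -> in_image (k + l - 1) (comp_op k l i f g)) /\
   (forall (n : nat) (sigma : nat -> nat) (g : cmap),
      is_perm n sigma -> in_image n g -> in_image n (perm_act g sigma))).
Proof. split; [apply part1|]. split; [apply id_image|]. split.
 - intros; apply comp_image; auto.
 - intros; apply perm_image; auto. Qed.
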